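(* Let $n\ge2$ and let $\underline\zeta=(\zeta_1,\dots,\zeta_n)\in\mathbb R^n$ be such that $1,\zeta_1,\dots,\zeta_n$ are linearly independent over $\mathbb Q$. (i) Unconditionally, $$w_{n,3}(\underline\zeta)\ge\frac{\widehat w_n(\underline\zeta)^2}{w_n(\underline\zeta)}.$$ (ii) Suppose that there are infinitely many $k$ such that the $n+1$ consecutive best approximations $v_k,v_{k+1},\dots,v_{k+n}$ for the linear form are linearly independent. Then $$w_{n,i}(\underline\zeta)\ge\frac{\widehat w_n(\underline\zeta)^{i-1}}{w_n(\underline\zeta)^{i-2}}\quad(1\le i\le n+1)$$ and $$w_n(\underline\zeta)\ge\widehat w_n(\underline\zeta)\left(\frac{\widehat w_n(\underline\zeta)-1}{n-1}\right)^{\frac1{n-1}}.$$ (iii) Dually and unconditionally, $$\lambda_{n,3}(\underline\zeta)\ge\frac{\widehat\lambda_n(\underline\zeta)^2}{\lambda_n(\underline\zeta)}.$$ (iv) If there are infinitely many $k$ such that $n+1$ consecutive simultaneous best approximations $u_k,\dots,u_{k+n}$ are linearly independent, then $$\lambda_{n,i}(\underline\zeta)\ge\frac{\widehat\lambda_n(\underline\zeta)^{i-1}}{\lambda_n(\underline\zeta)^{i-2}}\quad(1\le i\le n+1)$$ and $$\lambda_n(\underline\zeta)\ge\widehat\lambda_n(\underline\zeta)\left(\frac{(n-1)\widehat\lambda_n(\underline\zeta)}{1-\widehat\lambda_n(\underline\zeta)}\right)^{\frac1{n-1}}.$$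
   Context: For an integer vector $v=(x,y_1,\dots,y_n)\in\mathbb Z^{n+1}$ let $H(v)=\max\{|x|,|y_1|,\dots,|y_n|\}$. Linear form exponents. Let $L(v)=x+\zeta_1y_1+\dots+\zeta_ny_n$. For $1\le j\le n+1$: - $w_{n,j}(\underline\zeta)$ is the supremum of $\nu$ such that, for arbitrarily large $X$, the system $H(v)\le X$, $|L(v)|\le X^{-\nu}$ has $j$ linearly independent integer solutions $v$; - $\widehat w_{n,j}(\underline\zeta)$ is the same supremum with ''for all sufficiently large $X$'' in place of ''for arbitrarily large $X$''; - $w_n=w_{n,1}$ and $\widehat w_n=\widehat w_{n,1}$. Simultaneous approximation exponents. For $1\le j\le n+1$: - $\lambda_{n,j}(\underline\zeta)$ is the supremum of $\nu$ such that, for arbitrarily large $X$, the system $|x|\le X$, $\max_i|\zeta_ix-y_i|\le X^{-\nu}$ has $j$ linearly independent integer solutions $(x,y_1,\dots,y_n)$; - $\widehat\lambda_{n,j}$ is the same supremum with ''for all large $X$''; - $\lambda_n=\lambda_{n,1}$ and $\widehat\lambda_n=\widehat\lambda_{n,1}$. Best approximations. A best approximation for the linear form is a nonzero $v\in\mathbb Z^{n+1}$ such that every nonzero $u\in\mathbb Z^{n+1}$ with $H(u)<H(v)$ satisfies $|L(u)|>|L(v)|$. Up to sign, these form a sequence $v_1,v_2,\dots$ with nondecreasing heights and strictly decreasing $|L(v_k)|$. Simultaneous best approximations $u_1,u_2,\dots$ are defined analogously, using $|x|$ in place of $H$ and $\max_i|\zeta_ix-y_i|$ in place of $|L|$. 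*)

(* Defs.v *)
From Stdlib Require Import Reals QArith Qreals.
Open Scope R_scope.

Fixpoint rsum (f : nat -> R) (m : nat) : R :=
  match m with O => 0 | S p => rsum f p + f p end.

Fixpoint rmax (f : nat -> R) (m : nat) : R :=
  match m with O => 0 | S p => Rmax (rmax f p) (f p) end.

(* An integer vector v = (x, y_1, ..., y_n) in Z^{n+1} is represented by
   v : nat -> Z with v 0 = x and v (S i) = y_{i+1} (i < n); entries beyond
   index n are irrelevant.  zeta i stands for zeta_{i+1} (i < n). *)
Definition zvec := nat -> Z.

Definition height (n : nat) (v : zvec) : R :=
  rmax (fun i => Rabs (IZR (v i))) (S n).

Definition linform (n : nat) (zeta : nat -> R) (v : zvec) : R :=
  IZR (v 0%nat) + rsum (fun i => zeta i * IZR (v (S i))) n.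

Definition simdist (n : nat) (zeta : nat -> R) (v : zvec) : R :=
  rmax (fun i => Rabs (zeta i * IZR (v 0%nat) - IZR (v (S i)))) n.

Definition nonzero (n : nat) (v : zvec) : Prop :=
  exists i, (i <= n)%nat /\ v i <> 0%Z.

Definition lin_indep (n j : nat) (V : nat -> zvec) : Prop :=
  forall c : nat -> R,
    (forall i, (i <= n)%nat -> rsum (fun k => c k * IZR (V k i)) j = 0) ->
    forall k, (k < j)%nat -> c k = 0.

Definition Q_lin_indep_1 (n : nat) (zeta : nat -> R) : Prop :=
  forall (c0 : Q) (c : nat -> Q),
    Q2R c0 + rsum (fun i => Q2R (c i) * zeta i) n = 0 ->
    Q2R c0 = 0 /\ forall i, (i < n)%nat -> Q2R (c i) = 0.

Definition w_set (n : nat) (zeta : nat -> R) (j : nat) (nu : R) : Prop :=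
  forall X0, exists X, X0 <= X /\ 1 <= X /\
    exists V : nat -> zvec, lin_indep n j V /\
      forall k, (k < j)%nat ->
        height n (V k) <= X /\ Rabs (linform n zeta (V k)) <= Rpower X (- nu).

Definition what_set (n : nat) (zeta : nat -> R) (j : nat) (nu : R) : Prop :=
  exists X0, 1 <= X0 /\ forall X, X0 <= X ->
    exists V : nat -> zvec, lin_indep n j V /\
      forall k, (k < j)%nat ->
        height n (V k) <= X /\ Rabs (linform n zeta (V k)) <= Rpower X (- nu).

Definition lambda_set (n : nat) (zeta : nat -> R) (j : nat) (nu : R) : Prop :=
  forall X0, exists X, X0 <= X /\ 1 <= X /\
    exists V : nat -> zvec, lin_indep n j V /\
      forall k, (k < j)%nat ->
        Rabs (IZR (V k 0%nat)) <= X /\ simdist n zeta (V k) <= Rpower X (- nu).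

Definition lhat_set (n : nat) (zeta : nat -> R) (j : nat) (nu : R) : Prop :=
  exists X0, 1 <= X0 /\ forall X, X0 <= X ->
    exists V : nat -> zvec, lin_indep n j V /\
      forall k, (k < j)%nat ->
        Rabs (IZR (V k 0%nat)) <= X /\ simdist n zeta (V k) <= Rpower X (- nu).

Definition same_up_to_sign (n : nat) (u v : zvec) : Prop :=
  (forall i, (i <= n)%nat -> u i = v i) \/
  (forall i, (i <= n)%nat -> u i = Z.opp (v i)).

Definition best_approx (n : nat) (zeta : nat -> R) (v : zvec) : Prop :=
  nonzero n v /\
  forall u, nonzero n u -> height n u < height n v ->
    Rabs (linform n zeta u) > Rabs (linform n zeta v).

Definition best_approx_seq (n : nat) (zeta : nat -> R) (bv : nat -> zvec) : Prop :=
  (forall k, best_approx n zeta (bv k)) /\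
  (forall v, best_approx n zeta v -> exists k, same_up_to_sign n v (bv k)) /\
  (forall k, height n (bv k) <= height n (bv (S k)) /\
             Rabs (linform n zeta (bv (S k))) < Rabs (linform n zeta (bv k))).

Definition sim_best_approx (n : nat) (zeta : nat -> R) (v : zvec) : Prop :=
  v 0%nat <> 0%Z /\
  (forall i, (i < n)%nat -> forall y : Z,
      Rabs (zeta i * IZR (v 0%nat) - IZR (v (S i))) <=
      Rabs (zeta i * IZR (v 0%nat) - IZR y)) /\
  forall u, nonzero n u -> Rabs (IZR (u 0%nat)) < Rabs (IZR (v 0%nat)) ->
    simdist n zeta u > simdist n zeta v.

Definition sim_best_approx_seq (n : nat) (zeta : nat -> R) (bu : nat -> zvec) : Prop :=
  (forall k, sim_best_approx n zeta (bu k)) /\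
  (forall v, sim_best_approx n zeta v -> exists k, same_up_to_sign n v (bu k)) /\
  (forall k, Rabs (IZR (bu k 0%nat)) <= Rabs (IZR (bu (S k) 0%nat)) /\
             simdist n zeta (bu (S k)) < simdist n zeta (bu k)).

(* Main.v *)
Require Import Defs.
From Stdlib Require Import Reals QArith Qreals.
Open Scope R_scope.
From Stdlib Require Import Lra Lia List Classical Epsilon.
Require Import Defs.
Open Scope R_scope.

Lemma rsum_ext f g m : (forall i, (i < m)%nat -> f i = g i) -> rsum f m = rsum g m.
Proof.
  induction m; simpl; intros H; auto.
  rewrite IHm by (intros; apply H; lia). rewrite H by lia. reflexivity.
Qed.

Lemma rsum_plus f g m : rsum (fun i => f i + g i) m = rsum f m + rsum g m.
Proof. induction m; simpl; [lra|rewrite IHm; lra]. Qed.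

Lemma rsum_scal c f m : rsum (fun i => c * f i) m = c * rsum f m.
Proof. induction m; simpl; [lra|rewrite IHm; lra]. Qed.

Lemma rsum_zero m : rsum (fun _ => 0) m = 0.
Proof. induction m; simpl; [lra|rewrite IHm; lra]. Qed.

Lemma rsum_single f m j : (j < m)%nat -> (forall i, (i < m)%nat -> i <> j -> f i = 0) ->
  rsum f m = f j.
Proof.
  induction m; intros Hj H; simpl. lia.
  destruct (Nat.eq_dec j m).
  - subst. rewrite (rsum_ext f (fun _ => 0)). rewrite rsum_zero; lra.
    intros; apply H; lia.
  - rewrite IHm by (try lia; intros; apply H; lia). rewrite (H m) by lia. lra.
Qed.

Lemma rsum_abs f m : Rabs (rsum f m) <= rsum (fun i => Rabs (f i)) m.
Proof.
  induction m; simpl. rewrite Rabs_R0; lra.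
  eapply Rle_trans. apply Rabs_triang. lra.
Qed.

Lemma rsum_1 f : rsum f 1 = f 0%nat.
Proof. simpl; lra. Qed.
Lemma rsum_2 f : rsum f 2 = f 0%nat + f 1%nat.
Proof. simpl; lra. Qed.
Lemma rsum_3 f : rsum f 3 = f 0%nat + f 1%nat + f 2%nat.
Proof. simpl; lra. Qed.

Lemma rmax_ge0 f m : 0 <= rmax f m.
Proof. induction m; simpl. lra. eapply Rle_trans. apply IHm. apply Rmax_l. Qed.

Lemma rmax_ge f m i : (i < m)%nat -> f i <= rmax f m.
Proof.
  induction m; intros Hi; simpl. lia.
  destruct (Nat.eq_dec i m). subst. apply Rmax_r.
  eapply Rle_trans. apply IHm; lia. apply Rmax_l.
Qed.

Lemma rmax_le f m B : 0 <= B -> (forall i, (i < m)%nat -> f i <= B) -> rmax f m <= B.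
Proof.
  induction m; intros HB H; simpl. auto.
  apply Rmax_lub. apply IHm; auto. apply H; lia.
Qed.

Lemma rmax_ext f g m : (forall i, (i < m)%nat -> f i = g i) -> rmax f m = rmax g m.
Proof.
  induction m; simpl; intros H; auto.
  rewrite IHm by (intros; apply H; lia). rewrite H by lia. reflexivity.
Qed.

Lemma rmax_scal t f m : 0 <= t -> rmax (fun i => t * f i) m = t * rmax f m.
Proof.
  intros Ht; induction m; simpl. lra. rewrite IHm. apply RmaxRmult; auto.
Qed.

Lemma IZR_abs_ge1 z : z <> 0%Z -> 1 <= Rabs (IZR z).
Proof.
  intros Hz. rewrite Rabs_Zabs. apply IZR_le. lia.
Qed.

Lemma IZR_neq_gap a b : a <> b -> 1 <= Rabs (IZR a - IZR b).
Proof. intros H. rewrite <- minus_IZR. apply IZR_abs_ge1. lia. Qed.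

Lemma IZR_lt_succ a b : IZR a < IZR b -> IZR a + 1 <= IZR b.
Proof. intros H. apply lt_IZR in H. rewrite <- plus_IZR. apply IZR_le. lia. Qed.

Lemma height_ge n v i : (i <= n)%nat -> Rabs (IZR (v i)) <= height n v.
Proof. intros; unfold height; apply (rmax_ge (fun i => Rabs (IZR (v i)))); lia. Qed.

Lemma height_le n v B : 0 <= B -> (forall i, (i <= n)%nat -> Rabs (IZR (v i)) <= B) ->
  height n v <= B.
Proof. intros; unfold height; apply rmax_le; auto; intros; apply H0; lia. Qed.

Lemma height_ge0 n v : 0 <= height n v.
Proof. apply rmax_ge0. Qed.

Lemma height_ge1 n v : nonzero n v -> 1 <= height n v.
Proof.
  intros [i [Hi Hv]]. eapply Rle_trans. apply IZR_abs_ge1; eauto. apply height_ge; auto.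
Qed.

Lemma simdist_ge n zeta v i : (i < n)%nat ->
  Rabs (zeta i * IZR (v 0%nat) - IZR (v (S i))) <= simdist n zeta v.
Proof. intros; unfold simdist; apply (rmax_ge (fun i => Rabs (zeta i * IZR (v 0%nat) - IZR (v (S i))))); auto. Qed.

Lemma simdist_le n zeta v B : 0 <= B ->
  (forall i, (i < n)%nat -> Rabs (zeta i * IZR (v 0%nat) - IZR (v (S i))) <= B) ->
  simdist n zeta v <= B.
Proof. intros; unfold simdist; apply rmax_le; auto. Qed.

Lemma simdist_ge0 n zeta v : 0 <= simdist n zeta v.
Proof. apply rmax_ge0. Qed.

Definition rv (v : zvec) (i : nat) : R := IZR (v i).

Lemma height_scal n u v t : (forall i, (i <= n)%nat -> rv u i = t * rv v i) ->
  height n u = Rabs t * height n v.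
Proof.
  intros H. unfold height. rewrite <- rmax_scal by apply Rabs_pos.
  apply rmax_ext. intros i Hi. unfold rv in H. rewrite H by lia. apply Rabs_mult.
Qed.

Lemma linform_lin2 n zeta u p q a b :
  (forall i, (i <= n)%nat -> rv u i = a * rv p i + b * rv q i) ->
  linform n zeta u = a * linform n zeta p + b * linform n zeta q.
Proof.
  intros H. unfold linform. unfold rv in H. rewrite H by lia.
  rewrite (rsum_ext _ (fun i => a * (zeta i * IZR (p (S i))) + b * (zeta i * IZR (q (S i))))).
  rewrite rsum_plus, !rsum_scal. ring.
  intros i Hi. rewrite H by lia. ring.
Qed.

Lemma linform_scal n zeta u v t : (forall i, (i <= n)%nat -> rv u i = t * rv v i) ->
  linform n zeta u = t * linform n zeta v.
Proof.
  intros H. rewrite (linform_lin2 n zeta u v v t 0). ring.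
  intros i Hi; rewrite H by auto; ring.
Qed.

Lemma simdist_scal n zeta u v t : (forall i, (i <= n)%nat -> rv u i = t * rv v i) ->
  simdist n zeta u = Rabs t * simdist n zeta v.
Proof.
  intros H. unfold simdist. rewrite <- rmax_scal by apply Rabs_pos.
  apply rmax_ext. intros i Hi. unfold rv in H. rewrite !H by lia.
  rewrite <- Rabs_mult. f_equal. ring.
Qed.

Lemma lin_indep_1 n u : nonzero n u -> lin_indep n 1 (fun _ => u).
Proof.
  intros [i [Hi Hu]] c Hc k Hk. assert (k = 0%nat) by lia. subst.
  specialize (Hc i Hi). rewrite rsum_1 in Hc.
  apply Rmult_integral in Hc. destruct Hc; auto. apply eq_IZR in H. contradiction.
Qed.

Lemma lin_indep_1_nonzero n V : lin_indep n 1 V -> nonzero n (V 0%nat).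
Proof.
  intros H. apply NNPP. intros Hn.
  assert (Hc : 1 = 0). { refine (H (fun _ => 1) _ 0%nat _); [|lia].
    intros i Hi. rewrite rsum_1. assert (V 0%nat i = 0%Z).
    { apply NNPP; intro; apply Hn; exists i; auto. } rewrite H0. lra. }
  simpl in Hc. lra.
Qed.

Lemma rsum_extend_zero f m m' : (m <= m')%nat -> (forall i, (m <= i)%nat -> f i = 0) ->
  rsum f m' = rsum f m.
Proof.
  intros Hm H. induction Hm. reflexivity. simpl. rewrite IHHm, H by lia. lra.
Qed.

Lemma lin_indep_le n j j' V : (j' <= j)%nat -> lin_indep n j V -> lin_indep n j' V.
Proof.
  intros Hj H c Hc k Hk.
  set (c' := fun k => if Nat.ltb k j' then c k else 0).
  assert (c' k = 0).
  { apply (H c'); [|lia]. intros i Hi.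
    rewrite (rsum_extend_zero _ j' j); [| auto |].
    2:{ intros i0 Hi0; unfold c'; destruct (Nat.ltb_spec i0 j'); [lia|lra]. }
    rewrite <- (Hc i Hi). apply rsum_ext. intros i0 Hi0. unfold c'.
    destruct (Nat.ltb_spec i0 j'); [auto|lia]. }
  unfold c' in H0. destruct (Nat.ltb_spec k j'); [auto|lia].
Qed.

Lemma min_exists {A} (f : A -> nat) (P : A -> Prop) :
  (exists a, P a) -> exists a, P a /\ forall b, P b -> (f a <= f b)%nat.
Proof.
  intros [a Ha]. apply NNPP. intros Hn.
  assert (forall m b, f b = m -> ~ P b).
  { intro m. induction m as [m IH] using (well_founded_induction Wf_nat.lt_wf). intros b Hb Pb.
    apply Hn. exists b. split; auto. intros b' Pb'.
    destruct (Compare_dec.le_lt_dec (f b) (f b')); auto. exfalso. apply (IH (f b') ltac:(lia) b'); auto. }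
  apply (H (f a) a); auto.
Qed.


Lemma ln_le x y : 0 < x -> x <= y -> ln x <= ln y.
Proof. intros Hx [H|H]. left; apply ln_increasing; auto. subst; lra. Qed.

Lemma exp_le x y : x <= y -> exp x <= exp y.
Proof. intros [H|H]. left; apply exp_increasing; auto. subst; lra. Qed.

Lemma le_Rpower_of_ln e X y : 0 < e -> ln e <= y * ln X -> e <= Rpower X y.
Proof. intros He H. unfold Rpower. rewrite <- (exp_ln e) by auto. apply exp_le; auto. Qed.

Lemma ln_of_le_Rpower e X y : 0 < e -> e <= Rpower X y -> ln e <= y * ln X.
Proof. intros He H. rewrite <- ln_Rpower. apply ln_le; auto. Qed.

Lemma Rpower_ge1 X y : 1 <= X -> 0 <= y -> 1 <= Rpower X y.
Proof.
  intros HX Hy. rewrite <- (Rpower_O X) by lra. apply Rle_Rpower; auto.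
Qed.

Lemma Rpower_anti X a b : 1 <= X -> a <= b -> Rpower X (- b) <= Rpower X (- a).
Proof. intros; apply Rle_Rpower; lra. Qed.

Definition gset (n : nat) (ht er : zvec -> R) (j : nat) (nu : R) : Prop :=
  forall X0, exists X, X0 <= X /\ 1 <= X /\
    exists V : nat -> zvec, lin_indep n j V /\
      forall k, (k < j)%nat -> ht (V k) <= X /\ er (V k) <= Rpower X (- nu).

Definition ghat (n : nat) (ht er : zvec -> R) (j : nat) (nu : R) : Prop :=
  exists X0, 1 <= X0 /\ forall X, X0 <= X ->
    exists V : nat -> zvec, lin_indep n j V /\
      forall k, (k < j)%nat -> ht (V k) <= X /\ er (V k) <= Rpower X (- nu).

Lemma gset_mono n ht er j a b : gset n ht er j b -> a <= b -> gset n ht er j a.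
Proof.
  intros H Hab X0. destruct (H X0) as [X [H1 [H2 [V [HV HH]]]]].
  exists X; repeat split; auto. exists V; split; auto. intros k Hk.
  destruct (HH k Hk); split; auto. eapply Rle_trans; eauto. apply Rpower_anti; auto.
Qed.

Lemma ghat_mono n ht er j a b : ghat n ht er j b -> a <= b -> ghat n ht er j a.
Proof.
  intros [X0 [H1 H]] Hab. exists X0; split; auto. intros X HX.
  destruct (H X HX) as [V [HV HH]]. exists V; split; auto. intros k Hk.
  destruct (HH k Hk); split; auto. eapply Rle_trans; eauto. apply Rpower_anti; lra.
Qed.

Lemma ghat_gset n ht er j a : ghat n ht er j a -> gset n ht er j a.
Proof.
  intros [X0 [H1 H]] X1. exists (Rmax X0 X1). split; [apply Rmax_r|].
  split. eapply Rle_trans; [|apply Rmax_l]; auto. apply H. apply Rmax_l.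
Qed.

Lemma lub_ge (E : R -> Prop) l T : is_lub E l -> (forall r, r < T -> E r) -> T <= l.
Proof.
  intros [Hub Hl] H. destruct (Rle_dec T l); auto. exfalso.
  assert (E ((T + l) / 2)) by (apply H; lra). apply Hub in H0. lra.
Qed.

Lemma lub_in (E : R -> Prop) l nu : is_lub E l -> (forall a b, E a -> b <= a -> E b) ->
  nu < l -> E nu.
Proof.
  intros [Hub Hl] Hm Hnu. apply NNPP. intros Hn.
  assert (l <= nu). { apply Hl. intros x Ex. destruct (Rle_dec x nu); auto.
    exfalso. apply Hn. apply (Hm x); auto; lra. }
  lra.
Qed.

Lemma lub_ub (E : R -> Prop) l x : is_lub E l -> E x -> x <= l.
Proof. intros [H _] Hx. apply H; auto. Qed.

Lemma ghat_lub_in n ht er j wh nu : is_lub (ghat n ht er j) wh -> nu < wh -> ghat n ht er j nu.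
Proof. intros H Hn. eapply lub_in; eauto. intros; eapply ghat_mono; eauto. Qed.

Lemma hat_le_set n ht er j w wh : is_lub (gset n ht er j) w -> is_lub (ghat n ht er j) wh -> wh <= w.
Proof.
  intros Hw [_ Hwh]. apply Hwh. intros x Hx. apply (lub_ub _ _ _ Hw). apply ghat_gset; auto.
Qed.

Definition SeqH (n : nat) (ht er : zvec -> R) (s : nat -> zvec) : Prop :=
  (forall k, ht (s k) <= ht (s (S k))) /\
  (forall k, er (s (S k)) < er (s k)) /\
  (forall k u, nonzero n u -> ht u < ht (s (S k)) -> er (s k) <= er u) /\
  (forall B, exists k, B < ht (s k)) /\
  (forall k, 0 < er (s k)) /\
  (forall k, 1 <= ht (s k)) /\
  (forall k, nonzero n (s k)).

Lemma seq_ht_mono n ht er s : SeqH n ht er s -> forall j j', (j <= j')%nat -> ht (s j) <= ht (s j').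
Proof.
  intros [H _] j j' Hj. induction Hj. lra. eapply Rle_trans; eauto.
Qed.

Lemma seq_er_mono n ht er s : SeqH n ht er s -> forall j j', (j <= j')%nat -> er (s j') <= er (s j).
Proof.
  intros [_ [H _]] j j' Hj. induction Hj. lra. eapply Rle_trans; [|eauto]. left; auto.
Qed.

Lemma seq_unb n ht er s : SeqH n ht er s -> forall B K, exists k, (K <= k)%nat /\
  forall k', (k <= k')%nat -> B < ht (s k').
Proof.
  intros Hs B K. pose proof Hs as Hs'. destruct Hs' as (_ & _ & _ & Hu & _). destruct (Hu B) as [k Hk].
  exists (Nat.max K k). split. lia. intros k' Hk'.
  eapply Rlt_le_trans; eauto. eapply seq_ht_mono; eauto. lia.
Qed.

Lemma seq_P1 n ht er s nu : SeqH n ht er s -> ghat n ht er 1 nu -> 0 <= nu ->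
  exists K, forall k, (K <= k)%nat ->
    ln (er (s k)) <= nu * ln 2 - nu * ln (ht (s (S k))).
Proof.
  intros Hs [X0 [HX0 Hh]] Hnu.
  destruct (seq_unb n ht er s Hs (2 * X0) 0) as [K [_ HK]].
  exists K. intros k Hk.
  assert (Hh1 : 2 * X0 < ht (s (S k))) by (apply HK; lia).
  set (h := ht (s (S k))) in *.
  destruct (Hh (h / 2)) as [V [HV HVb]]. lra.
  destruct (HVb 0%nat) as [Hht Her]. lia.
  destruct Hs as (_ & _ & Hb & _ & Hpos & _).
  assert (Hle : er (s k) <= er (V 0%nat)).
  { apply Hb. apply lin_indep_1_nonzero; auto. fold h. lra. }
  assert (Hp := Hpos k).
  apply ln_of_le_Rpower in Her; [|lra].
  assert (ln (er (s k)) <= ln (er (V 0%nat))) by (apply ln_le; auto).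
  unfold Rdiv in Her. rewrite ln_mult, ln_Rinv in Her by lra. nra.
Qed.

Lemma lub_P2 n ht er w mu : is_lub (gset n ht er 1) w -> w < mu ->
  exists B, 1 <= B /\ forall u, nonzero n u -> B <= ht u -> Rpower (ht u) (- mu) < er u.
Proof.
  intros Hw Hmu.
  assert (Hn : ~ gset n ht er 1 mu) by (intro H; apply (lub_ub _ _ _ Hw) in H; lra).
  unfold gset in Hn. apply not_all_ex_not in Hn. destruct Hn as [X0 Hn].
  exists (Rmax X0 1). split. apply Rmax_r. intros u Hu HB.
  destruct (Rlt_le_dec (Rpower (ht u) (- mu)) (er u)) as [H|H]; auto.
  exfalso. apply Hn. exists (ht u). split. eapply Rle_trans; [apply Rmax_l|eauto].
  split. eapply Rle_trans; [apply Rmax_r|eauto].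
  exists (fun _ => u). split. apply lin_indep_1; auto. intros k Hk; split; lra.
Qed.

Lemma seq_P2 n ht er s w mu : SeqH n ht er s -> is_lub (gset n ht er 1) w -> w < mu ->
  exists K, forall k, (K <= k)%nat -> - mu * ln (ht (s k)) < ln (er (s k)).
Proof.
  intros Hs Hw Hmu. destruct (lub_P2 n ht er w mu Hw Hmu) as [B [HB H]].
  destruct (seq_unb n ht er s Hs B 0) as [K [_ HK]]. exists K. intros k Hk.
  assert (HH := H (s k)). destruct Hs as (_ & _ & _ & _ & Hpos & H1 & Hnz).
  rewrite <- (ln_Rpower (ht (s k)) (- mu)). apply ln_increasing.
  unfold Rpower; apply exp_pos. apply HH; auto. left; apply HK; auto.
Qed.

Lemma chain (a : nat -> R) th c K : 1 <= th -> 0 <= c ->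
  (forall k, (K <= k)%nat -> a (S k) <= th * a k + c) ->
  forall k m, (K <= k)%nat -> a (k + m)%nat <= th ^ m * (a k + INR m * c).
Proof.
  intros Hth Hc H k m Hk. induction m.
  - rewrite Nat.add_0_r. simpl. lra.
  - rewrite Nat.add_succ_r. eapply Rle_trans. apply H. lia.
    assert (1 <= th ^ S m) by (apply pow_R1_Rle; auto).
    rewrite S_INR. simpl. 
    assert (th * a (k + m)%nat <= th * (th ^ m * (a k + INR m * c))) by (apply Rmult_le_compat_l; lra).
    assert (c <= th * th ^ m * c). { rewrite <- (Rmult_1_l c) at 1. apply Rmult_le_compat_r; auto. }
    nra.
Qed.

Lemma bernoulli t m : 0 <= t <= 1 -> 1 - INR m * t <= (1 - t) ^ m.
Proof.
  intros Ht. induction m. simpl. lra.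
  rewrite S_INR. simpl.
  assert ((1 - t) * (1 - INR m * t) <= (1 - t) * (1 - t) ^ m) by (apply Rmult_le_compat_l; lra).
  assert (0 <= INR m) by apply pos_INR. nra.
Qed.


Lemma pow_div a b j : (a / b) ^ j = a ^ j / b ^ j.
Proof. unfold Rdiv. rewrite Rpow_mult_distr, pow_inv. reflexivity. Qed.

Lemma ln2_pos : 0 < ln 2.
Proof. pose proof ln_lt_2; lra. Qed.

Lemma pow_pos' x j : 0 < x -> 0 < x ^ j.
Proof. intros; apply pow_lt; auto. Qed.

Lemma seq_step n ht er s w nu mu : SeqH n ht er s -> is_lub (gset n ht er 1) w ->
  ghat n ht er 1 nu -> 0 < nu -> w < mu ->
  exists K, forall k, (K <= k)%nat ->
    ln (er (s k)) <= nu * ln 2 - nu * ln (ht (s (S k))) /\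
    ln (ht (s (S k))) <= (mu / nu) * ln (ht (s k)) + ln 2.
Proof.
  intros Hs Hw Hh Hnu Hmu.
  destruct (seq_P1 n ht er s nu Hs Hh) as [K1 H1]. lra.
  destruct (seq_P2 n ht er s w mu Hs Hw Hmu) as [K2 H2].
  exists (Nat.max K1 K2). intros k Hk.
  assert (A := H1 k ltac:(lia)). assert (B := H2 k ltac:(lia)). split; auto.
  apply (Rmult_le_reg_l nu); auto.
  replace (nu * (mu / nu * ln (ht (s k)) + ln 2)) with (mu * ln (ht (s k)) + nu * ln 2) by (field; lra).
  lra.
Qed.

Lemma G1zero n ht er s J rho : SeqH n ht er s -> ghat n ht er 1 0 -> (1 <= J)%nat ->
  (forall K, exists k, (K <= k)%nat /\ lin_indep n J (fun m => s (k + m)%nat)) ->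
  rho <= 0 -> gset n ht er J rho.
Proof.
  intros Hs Hh HJ Hinf Hr X0.
  destruct (seq_P1 n ht er s 0 Hs Hh (Rle_refl 0)) as [K1 H1].
  destruct (Hinf K1) as [k [Hk Hli]].
  set (X := Rmax X0 (ht (s (k + (J - 1))%nat))).
  assert (Hs' := Hs). destruct Hs' as (_ & _ & _ & _ & Hpos & Hge1 & _).
  exists X. split. apply Rmax_l. split. eapply Rle_trans; [apply (Hge1 (k + (J-1))%nat)|apply Rmax_r].
  exists (fun m => s (k + m)%nat). split; auto. intros m Hm. split.
  - eapply Rle_trans; [|apply Rmax_r]. apply (seq_ht_mono n ht er s Hs). lia.
  - eapply Rle_trans. apply (seq_er_mono n ht er s Hs k). lia.
    assert (ln (er (s k)) <= 0) by (specialize (H1 k Hk); lra).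
    assert (er (s k) <= 1). { rewrite <- (exp_ln (er (s k))) by auto. rewrite <- exp_0. apply exp_le; auto. }
    eapply Rle_trans; eauto. apply Rpower_ge1. eapply Rle_trans; [apply (Hge1 (k + (J-1))%nat)|apply Rmax_r]. lra.
Qed.

Lemma G1core n ht er s w J nu mu rho : SeqH n ht er s -> (2 <= J)%nat ->
  is_lub (gset n ht er 1) w -> ghat n ht er 1 nu -> 0 < nu -> nu <= mu -> w < mu ->
  (forall K, exists k, (K <= k)%nat /\ lin_indep n J (fun m => s (k + m)%nat)) ->
  rho < nu / (mu / nu) ^ (J - 2) -> gset n ht er J rho.
Proof.
  intros Hs HJ Hw Hh Hnu Hnm Hmu Hinf Hr X0.
  destruct (seq_step n ht er s w nu mu Hs Hw Hh Hnu Hmu) as [K HK].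
  set (th := mu / nu) in *.
  assert (Hth : 1 <= th). { unfold th. apply (Rmult_le_reg_r nu); auto. field_simplify; lra. }
  set (a := fun k => ln (ht (s k))).
  assert (Hch := chain a th (ln 2) K Hth (Rlt_le _ _ ln2_pos)
                   (fun k Hk => proj2 (HK k Hk))).
  set (P := th ^ (J - 2)) in *.
  assert (HP : 0 < P) by (apply pow_pos'; lra).
  set (rp := nu / P) in *.
  set (A0 := nu * INR (J - 1) * ln 2 / (rp - rho)).
  destruct (seq_unb n ht er s Hs (Rmax X0 (exp A0)) K) as [K3 [HK3a HK3]].
  destruct (Hinf K3) as [k [Hk Hli]].
  set (X := ht (s (k + (J - 1))%nat)).
  assert (Hs' := Hs). destruct Hs' as (_ & _ & _ & _ & Hpos & Hge1 & _).
  assert (HX : Rmax X0 (exp A0) < X) by (apply HK3; lia).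
  exists X. split. apply Rle_trans with (Rmax X0 (exp A0)); [apply Rmax_l|lra]. split. apply Hge1.
  exists (fun m => s (k + m)%nat). split; auto. intros m Hm. split.
  - apply (seq_ht_mono n ht er s Hs). lia.
  - eapply Rle_trans. apply (seq_er_mono n ht er s Hs k). lia.
    apply le_Rpower_of_ln; auto.
    assert (Hc := Hch (S k) (J - 2)%nat ltac:(lia)).
    replace (S k + (J - 2))%nat with (k + (J - 1))%nat in Hc by lia.
    fold X in Hc. change (ln X <= P * (a (S k) + INR (J - 2) * ln 2)) in Hc.
    destruct (HK k ltac:(lia)) as [Hb _].
    assert (HlnX : A0 < ln X).
    { rewrite <- (ln_exp A0). apply ln_increasing. apply exp_pos.
      apply Rle_lt_trans with (Rmax X0 (exp A0)); [apply Rmax_r|]; eauto. }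
    assert (Hrp : 0 < rp - rho) by lra.
    assert (HA0 : nu * INR (J - 1) * ln 2 <= (rp - rho) * ln X).
    { unfold A0 in HlnX. apply (Rmult_lt_compat_l (rp - rho)) in HlnX; auto.
      field_simplify in HlnX; lra. }
    assert (Ha1 : ln X / P - INR (J - 2) * ln 2 <= a (S k)).
    { apply (Rmult_le_reg_l P); auto.
      replace (P * (ln X / P - INR (J - 2) * ln 2)) with (ln X - P * (INR (J-2) * ln 2)) by (field; lra).
      nra. }
    assert (Hnua : nu * (ln X / P) = rp * ln X) by (unfold rp; field; lra).
    assert (HJ1 : INR (J - 1) = INR (J - 2) + 1).
    { replace (J - 1)%nat with (S (J - 2)) by lia. apply S_INR. }
    change (ln (ht (s (S k)))) with (a (S k)) in Hb.
    assert (nu * (ln X / P - INR (J - 2) * ln 2) <= nu * a (S k)) by (apply Rmult_le_compat_l; lra).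
    nra.
Qed.

Lemma G1 n ht er s w wh J : SeqH n ht er s -> (2 <= J)%nat ->
  is_lub (gset n ht er 1) w -> is_lub (ghat n ht er 1) wh -> ghat n ht er 1 0 ->
  (forall K, exists k, (K <= k)%nat /\ lin_indep n J (fun m => s (k + m)%nat)) ->
  forall rho, rho < wh ^ (J - 1) / w ^ (J - 2) -> gset n ht er J rho.
Proof.
  intros Hs HJ Hw Hwh H0 Hinf rho Hr.
  destruct (Rle_dec rho 0) as [Hr0|Hr0].
  { apply (G1zero n ht er s J rho); auto. lia. }
  assert (Hwh0 : 0 <= wh) by (apply (lub_ub _ _ _ Hwh); auto).
  assert (Hww : wh <= w) by (eapply hat_le_set; eauto).
  set (T := wh ^ (J - 1) / w ^ (J - 2)) in *.
  assert (Hwhp : 0 < wh).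
  { destruct Hwh0 as [|Hz]; auto. exfalso. unfold T in Hr. rewrite <- Hz in Hr.
    replace (J - 1)%nat with (S (J - 2)) in Hr by lia. simpl in Hr.
    unfold Rdiv in Hr. rewrite Rmult_0_l, Rmult_0_l in Hr. lra. }
  assert (Hwp : 0 < w) by lra.
  set (j := (J - 2)%nat).
  assert (HT : T = wh / (w / wh) ^ j).
  { unfold T. rewrite pow_div. replace (J - 1)%nat with (S j) by (unfold j; lia). simpl.
    fold j. field. split; apply pow_nonzero; lra. }
  assert (HTp : 0 < T) by lra.
  set (d := 2 * INR j + 1).
  assert (Hd : 1 <= d) by (unfold d; pose proof (pos_INR j); lra).
  set (t := Rmin (1/2) ((T - rho) / (2 * T * d))).
  assert (Ht0 : 0 < t).
  { unfold t. apply Rmin_glb_lt. lra. apply Rdiv_lt_0_compat; nra. }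
  assert (Ht1 : t <= 1/2) by apply Rmin_l.
  assert (Ht2 : t * (2 * T * d) <= T - rho).
  { assert (t <= (T - rho) / (2 * T * d)) by apply Rmin_r.
    apply (Rmult_le_compat_r (2 * T * d)) in H; [|nra]. field_simplify in H; nra. }
  set (nu := wh * (1 - t)). set (mu := w / (1 - t)).
  apply (G1core n ht er s w J nu mu rho); auto.
  - apply (ghat_lub_in _ _ _ _ wh); auto. unfold nu; nra.
  - unfold nu; nra.
  - unfold nu, mu. apply (Rle_trans _ w). nra. apply (Rmult_le_reg_r (1 - t)). lra.
    field_simplify; nra.
  - unfold mu. apply (Rmult_lt_reg_r (1 - t)). lra. field_simplify; nra.
  - fold j.
    assert (Hq : mu / nu = (w / wh) * (/ (1 - t)) ^ 2).
    { unfold mu, nu. field. lra. }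
    rewrite Hq, Rpow_mult_distr, <- pow_mult, pow_inv.
    assert (Hb := bernoulli t (2 * j + 1) ltac:(lra)).
    rewrite plus_INR, mult_INR in Hb. simpl (INR 2) in Hb. simpl (INR 1) in Hb.
    assert (Hv : nu / ((w / wh) ^ j * / (1 - t) ^ (2 * j)) = T * (1 - t) ^ (2 * j + 1)).
    { rewrite HT. unfold nu. rewrite pow_add. simpl (_ ^ 1).
      assert (0 < (w / wh) ^ j) by (apply pow_lt; apply Rdiv_lt_0_compat; lra).
      assert (0 < (1 - t) ^ (2 * j)) by (apply pow_lt; lra).
      field. repeat split; lra. }
    rewrite Hv. fold d in Hb. unfold d in Ht2.
    assert (T * (1 - (2 * INR j + 1) * t) <= T * (1 - t) ^ (2 * j + 1)) by (apply Rmult_le_compat_l; lra).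
    nra.
Qed.


Lemma cont_le_right f a g : continuity_pt f a -> (forall x, a < x -> g <= f x) -> g <= f a.
Proof.
  intros Hc H. destruct (Rle_dec g (f a)) as [|Hn]; auto. exfalso.
  unfold continuity_pt, continue_in, limit1_in, limit_in in Hc. simpl in Hc.
  destruct (Hc (g - f a)) as [alp [Halp Hx]]. lra.
  specialize (Hx (a + alp / 2)). unfold D_x, no_cond, R_dist in Hx.
  assert (Rabs (f (a + alp / 2) - f a) < g - f a).
  { apply Hx. split. split; auto; lra. replace (a + alp / 2 - a) with (alp / 2) by ring.
    rewrite Rabs_right; lra. }
  specialize (H (a + alp / 2) ltac:(lra)). apply Rabs_def2 in H0. lra.
Qed.

Lemma cont_le_left f a g d : continuity_pt f a -> 0 < d ->
  (forall x, a - d < x -> x < a -> f x <= g) -> f a <= g.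
Proof.
  intros Hc Hd H. destruct (Rle_dec (f a) g) as [|Hn]; auto. exfalso.
  unfold continuity_pt, continue_in, limit1_in, limit_in in Hc. simpl in Hc.
  destruct (Hc (f a - g)) as [alp [Halp Hx]]. lra.
  set (e := Rmin (alp / 2) (d / 2)).
  assert (0 < e) by (unfold e; apply Rmin_glb_lt; lra).
  assert (e <= alp / 2) by apply Rmin_l. assert (e <= d / 2) by apply Rmin_r.
  specialize (Hx (a - e)). unfold D_x, no_cond, R_dist in Hx.
  assert (Rabs (f (a - e) - f a) < f a - g).
  { apply Hx. split. split; auto; lra. replace (a - e - a) with (- e) by ring.
    rewrite Rabs_Ropp, Rabs_right; lra. }
  specialize (H (a - e) ltac:(lra) ltac:(lra)). apply Rabs_def2 in H3. lra.
Qed.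

Lemma ln_prod4 C x y z : 0 < C -> 0 < x -> 0 < y -> 0 < z -> ln (C * x * y * z) = ln C + ln x + ln y + ln z.
Proof. intros. rewrite !ln_mult; try lra; repeat apply Rmult_lt_0_compat; auto. Qed.

Lemma G2lin_core n ht er s w nu mu C : SeqH n ht er s -> (1 <= n)%nat ->
  is_lub (gset n ht er 1) w -> ghat n ht er 1 nu -> 0 < nu -> nu <= mu -> w < mu -> 0 < C ->
  (forall K, exists k, (K <= k)%nat /\
     1 <= C * er (s k) * ht (s (S k)) * ht (s (k + n)%nat) ^ (n - 1)) ->
  nu <= 1 + INR (n - 1) * (mu / nu) ^ (n - 1).
Proof.
  intros Hs Hn Hw Hh Hnu Hnm Hmu HC Hdet.
  destruct (seq_step n ht er s w nu mu Hs Hw Hh Hnu Hmu) as [K HK].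
  set (th := mu / nu) in *.
  assert (Hth : 1 <= th). { unfold th. apply (Rmult_le_reg_r nu); auto. field_simplify; lra. }
  set (a := fun k => ln (ht (s k))).
  assert (Hch := chain a th (ln 2) K Hth (Rlt_le _ _ ln2_pos)
                   (fun k Hk => proj2 (HK k Hk))).
  set (P := th ^ (n - 1)) in *.
  assert (HP : 0 < P) by (apply pow_pos'; lra).
  destruct (Rle_dec nu (1 + INR (n - 1) * P)) as [|Hc]; auto. exfalso.
  set (D := nu - 1 - INR (n - 1) * P).
  assert (HD : 0 < D) by (unfold D; lra).
  assert (Hn1 : 0 <= INR (n - 1)) by apply pos_INR.
  set (Cst := ln C + nu * ln 2 + INR (n - 1) * P * (INR (n - 1) * ln 2)).
  destruct (seq_unb n ht er s Hs (exp (Cst / D)) K) as [K3 [HK3a HK3]].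
  destruct (Hdet K3) as [k [Hk Hd]].
  assert (Hs' := Hs). destruct Hs' as (_ & _ & _ & _ & Hpos & Hge1 & _).
  assert (Hp1 : 0 < ht (s (S k))) by (specialize (Hge1 (S k)); lra).
  assert (Hpn : 0 < ht (s (k + n)%nat)) by (specialize (Hge1 (k + n)%nat); lra).
  apply ln_le in Hd; [|lra]. rewrite ln_1 in Hd.
  rewrite ln_prod4 in Hd; auto; [|apply pow_lt; auto].
  rewrite ln_pow in Hd by auto.
  assert (Hc1 := Hch (S k) (n - 1)%nat ltac:(lia)).
  replace (S k + (n - 1))%nat with (k + n)%nat in Hc1 by lia.
  change (ln (ht (s (k + n)%nat)) <= P * (ln (ht (s (S k))) + INR (n - 1) * ln 2)) in Hc1.
  destruct (HK k ltac:(lia)) as [Hb _].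
  assert (Ha : Cst / D < ln (ht (s (S k)))).
  { rewrite <- (ln_exp (Cst / D)). apply ln_increasing. apply exp_pos. apply HK3; lia. }
  assert (H1 : INR (n - 1) * ln (ht (s (k + n)%nat)) <=
               INR (n - 1) * (P * (ln (ht (s (S k))) + INR (n - 1) * ln 2))) by
    (apply Rmult_le_compat_l; auto).
  assert (H2 : D * (Cst / D) < D * ln (ht (s (S k)))) by (apply Rmult_lt_compat_l; auto).
  replace (D * (Cst / D)) with Cst in H2 by (field; lra).
  unfold D, Cst in H2. nra.
Qed.

Lemma G2lin n ht er s w wh C : SeqH n ht er s -> (1 <= n)%nat ->
  is_lub (gset n ht er 1) w -> is_lub (ghat n ht er 1) wh -> ghat n ht er 1 0 -> 0 < C ->
  (forall K, exists k, (K <= k)%nat /\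
     1 <= C * er (s k) * ht (s (S k)) * ht (s (k + n)%nat) ^ (n - 1)) ->
  wh ^ n <= wh ^ (n - 1) + INR (n - 1) * w ^ (n - 1).
Proof.
  intros Hs Hn Hw Hwh H0 HC Hdet.
  assert (Hwh0 : 0 <= wh) by (apply (lub_ub _ _ _ Hwh); auto).
  assert (Hww : wh <= w) by (eapply hat_le_set; eauto).
  assert (Hn1 : 0 <= INR (n - 1)) by apply pos_INR.
  assert (Hsn : n = S (n - 1)) by lia.
  destruct (Rle_dec wh 1) as [Hw1|Hw1].
  { rewrite Hsn at 1. simpl.
    assert (0 <= wh ^ (n - 1)) by (apply pow_le; auto).
    assert (0 <= w ^ (n - 1)) by (apply pow_le; lra).
    assert (wh * wh ^ (n - 1) <= 1 * wh ^ (n - 1)) by (apply Rmult_le_compat_r; auto).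
    nra. }
  assert (Hnu : forall nu, 0 < nu -> nu < wh -> nu ^ n - nu ^ (n - 1) <= INR (n - 1) * w ^ (n - 1)).
  { intros nu Hnu0 Hnu1.
    assert (Hh : ghat n ht er 1 nu) by (apply (ghat_lub_in _ _ _ _ wh); auto).
    assert (Hmu : forall mu, w < mu -> nu ^ n - nu ^ (n - 1) <= INR (n - 1) * mu ^ (n - 1)).
    { intros mu Hmu.
      assert (Hc := G2lin_core n ht er s w nu mu C Hs Hn Hw Hh Hnu0 ltac:(lra) Hmu HC Hdet).
      rewrite pow_div in Hc.
      assert (0 < nu ^ (n - 1)) by (apply pow_lt; auto).
      apply (Rmult_le_compat_r (nu ^ (n - 1))) in Hc; [|lra].
      replace ((1 + INR (n - 1) * (mu ^ (n - 1) / nu ^ (n - 1))) * nu ^ (n - 1))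
        with (nu ^ (n - 1) + INR (n - 1) * mu ^ (n - 1)) in Hc by (field; lra).
      rewrite Hsn at 1. simpl. lra. }
    apply (cont_le_right (fun mu => INR (n - 1) * mu ^ (n - 1)) w); [reg|]. intros; apply Hmu; auto. }
  apply Rminus_le. 
  assert (wh ^ n - wh ^ (n - 1) <= INR (n - 1) * w ^ (n - 1)).
  { apply (cont_le_left (fun x => x ^ n - x ^ (n - 1)) wh _ wh); [reg|lra|].
    intros x Hx1 Hx2. apply Hnu; lra. }
  lra.
Qed.

Lemma G2sim_core n ht er s w nu mu C : SeqH n ht er s -> (1 <= n)%nat ->
  is_lub (gset n ht er 1) w -> ghat n ht er 1 nu -> 0 < nu -> nu <= mu -> w < mu -> 0 < C ->
  (forall K, exists k, (K <= k)%nat /\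
     1 <= C * ht (s (k + n)%nat) * er (s (k + (n - 1))%nat) * er (s k) ^ (n - 1)) ->
  nu + INR (n - 1) * (nu / (mu / nu) ^ (n - 1)) <= 1.
Proof.
  intros Hs Hn Hw Hh Hnu Hnm Hmu HC Hdet.
  destruct (seq_step n ht er s w nu mu Hs Hw Hh Hnu Hmu) as [K HK].
  set (th := mu / nu) in *.
  assert (Hth : 1 <= th). { unfold th. apply (Rmult_le_reg_r nu); auto. field_simplify; lra. }
  set (a := fun k => ln (ht (s k))).
  assert (Hch := chain a th (ln 2) K Hth (Rlt_le _ _ ln2_pos)
                   (fun k Hk => proj2 (HK k Hk))).
  set (P := th ^ (n - 1)) in *.
  assert (HP : 0 < P) by (apply pow_pos'; lra).
  destruct (Rle_dec (nu + INR (n - 1) * (nu / P)) 1) as [|Hc]; auto. exfalso.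
  set (D := nu + INR (n - 1) * (nu / P) - 1).
  assert (HD : 0 < D) by (unfold D; lra).
  assert (Hn1 : 0 <= INR (n - 1)) by apply pos_INR.
  set (Cst := ln C + nu * ln 2 + INR (n - 1) * (nu * ln 2 + nu * INR (n - 1) * ln 2)).
  destruct (seq_unb n ht er s Hs (exp (Cst / D)) K) as [K3 [HK3a HK3]].
  destruct (Hdet K3) as [k [Hk Hd]].
  assert (Hs' := Hs). destruct Hs' as (_ & _ & _ & _ & Hpos & Hge1 & _).
  assert (Hpn : 0 < ht (s (k + n)%nat)) by (specialize (Hge1 (k + n)%nat); lra).
  apply ln_le in Hd; [|lra]. rewrite ln_1 in Hd.
  rewrite ln_prod4 in Hd; auto; [|apply pow_lt; auto].
  rewrite ln_pow in Hd by auto.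
  assert (Hc1 := Hch (S k) (n - 1)%nat ltac:(lia)).
  replace (S k + (n - 1))%nat with (k + n)%nat in Hc1 by lia.
  set (A := ln (ht (s (k + n)%nat))) in *.
  change (A <= P * (ln (ht (s (S k))) + INR (n - 1) * ln 2)) in Hc1.
  destruct (HK k ltac:(lia)) as [Hb _].
  destruct (HK (k + (n - 1))%nat ltac:(lia)) as [Hb' _].
  replace (S (k + (n - 1))) with (k + n)%nat in Hb' by lia. fold A in Hb'.
  assert (Ha : Cst / D < A).
  { unfold A. rewrite <- (ln_exp (Cst / D)). apply ln_increasing. apply exp_pos. apply HK3; lia. }
  assert (Ha1 : A / P - INR (n - 1) * ln 2 <= ln (ht (s (S k)))).
  { apply (Rmult_le_reg_l P); auto.
    replace (P * (A / P - INR (n - 1) * ln 2)) with (A - P * (INR (n - 1) * ln 2)) by (field; lra).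
    nra. }
  assert (Hb2 : ln (er (s k)) <= nu * ln 2 - nu * (A / P - INR (n - 1) * ln 2)).
  { assert (nu * (A / P - INR (n - 1) * ln 2) <= nu * ln (ht (s (S k)))) by (apply Rmult_le_compat_l; lra).
    lra. }
  assert (H1 : INR (n - 1) * ln (er (s k)) <=
               INR (n - 1) * (nu * ln 2 - nu * (A / P - INR (n - 1) * ln 2))) by
    (apply Rmult_le_compat_l; auto).
  assert (H2 : D * (Cst / D) < D * A) by (apply Rmult_lt_compat_l; auto).
  replace (D * (Cst / D)) with Cst in H2 by (field; lra).
  assert (Hid : INR (n - 1) * (nu * ln 2 - nu * (A / P - INR (n - 1) * ln 2)) =
     INR (n - 1) * (nu * ln 2 + nu * INR (n - 1) * ln 2) - INR (n - 1) * (nu / P) * A) by (field; lra).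
  rewrite Hid in H1.
  unfold D, Cst in H2. nra.
Qed.

Lemma G2sim n ht er s w wh C : SeqH n ht er s -> (1 <= n)%nat ->
  is_lub (gset n ht er 1) w -> is_lub (ghat n ht er 1) wh -> ghat n ht er 1 0 -> 0 < C ->
  (forall K, exists k, (K <= k)%nat /\
     1 <= C * ht (s (k + n)%nat) * er (s (k + (n - 1))%nat) * er (s k) ^ (n - 1)) ->
  wh * w ^ (n - 1) + INR (n - 1) * wh ^ n <= w ^ (n - 1).
Proof.
  intros Hs Hn Hw Hwh H0 HC Hdet.
  assert (Hwh0 : 0 <= wh) by (apply (lub_ub _ _ _ Hwh); auto).
  assert (Hww : wh <= w) by (eapply hat_le_set; eauto).
  assert (Hn1 : 0 <= INR (n - 1)) by apply pos_INR.
  assert (Hsn : n = S (n - 1)) by lia.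
  destruct Hwh0 as [Hwp|Hz].
  2:{ rewrite <- Hz. replace (0 ^ n) with 0 by (rewrite Hsn; simpl; ring).
       assert (0 <= w ^ (n - 1)) by (apply pow_le; lra). lra. }
  assert (Hnu : forall nu, 0 < nu -> nu < wh -> nu * w ^ (n - 1) + INR (n - 1) * nu ^ n <= w ^ (n - 1)).
  { intros nu Hnu0 Hnu1.
    assert (Hh : ghat n ht er 1 nu) by (apply (ghat_lub_in _ _ _ _ wh); auto).
    assert (Hmu : forall mu, w < mu -> INR (n - 1) * nu ^ n <= mu ^ (n - 1) - nu * mu ^ (n - 1)).
    { intros mu Hmu.
      assert (Hc := G2sim_core n ht er s w nu mu C Hs Hn Hw Hh Hnu0 ltac:(lra) Hmu HC Hdet).
      rewrite pow_div in Hc.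
      assert (0 < mu ^ (n - 1)) by (apply pow_lt; lra).
      assert (0 < nu ^ (n - 1)) by (apply pow_lt; lra).
      apply (Rmult_le_compat_r (mu ^ (n - 1))) in Hc; [|lra].
      replace ((nu + INR (n - 1) * (nu / (mu ^ (n - 1) / nu ^ (n - 1)))) * mu ^ (n - 1))
        with (nu * mu ^ (n - 1) + INR (n - 1) * (nu * nu ^ (n - 1))) in Hc by (field; lra).
      assert (Hpn : nu ^ n = nu * nu ^ (n - 1)) by (destruct n; [lia|simpl; rewrite Nat.sub_0_r; reflexivity]).
      rewrite Hpn. lra. }
    assert (INR (n - 1) * nu ^ n <= w ^ (n - 1) - nu * w ^ (n - 1)).
    { apply (cont_le_right (fun mu => mu ^ (n - 1) - nu * mu ^ (n - 1)) w); [reg|]. intros; apply Hmu; auto. }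
    lra. }
  apply (cont_le_left (fun x => x * w ^ (n - 1) + INR (n - 1) * x ^ n) wh _ wh); [reg|lra|].
  intros x Hx1 Hx2. apply Hnu; lra.
Qed.


Definition shift (s : nat -> zvec) (k : nat) : nat -> zvec := fun m => s (k + m)%nat.

Definition scal_ok (n : nat) (f : zvec -> R) : Prop :=
  forall u v t, (forall i, (i <= n)%nat -> rv u i = t * rv v i) -> f u = Rabs t * f v.

Lemma indep2_consec n ht er s : SeqH n ht er s -> scal_ok n ht -> scal_ok n er ->
  forall k, lin_indep n 2 (shift s k).
Proof.
  intros Hs Hht Her k c Hc m Hm.
  destruct Hs as (Hhm & Hes & _ & _ & Hpos & Hge1 & Hnz).
  unfold shift in Hc.
  assert (Hc' : forall i, (i <= n)%nat -> c 0%nat * rv (s k) i + c 1%nat * rv (s (S k)) i = 0).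
  { intros i Hi. specialize (Hc i Hi). rewrite rsum_2 in Hc. rewrite Nat.add_0_r, Nat.add_1_r in Hc. exact Hc. }
  assert (H0 : c 1%nat = 0 -> c 0%nat = 0).
  { intros H1. destruct (Hnz k) as [i [Hi Hv]]. specialize (Hc' i Hi). rewrite H1 in Hc'.
    unfold rv in Hc'. assert (IZR (s k i) <> 0) by (intro; apply Hv; apply eq_IZR; auto).
    rewrite Rmult_0_l, Rplus_0_r in Hc'. apply Rmult_integral in Hc'. destruct Hc'; [auto|]. lra. }
  assert (H1 : c 1%nat = 0).
  { apply NNPP. intros H1.
    set (t := - c 0%nat / c 1%nat).
    assert (Hr : forall i, (i <= n)%nat -> rv (s (S k)) i = t * rv (s k) i).
    { intros i Hi. specialize (Hc' i Hi). unfold t. field_simplify; auto. 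
      apply (Rmult_eq_reg_l (c 1%nat)); auto. field_simplify; auto. lra. }
    assert (E1 := Hht _ _ _ Hr). assert (E2 := Her _ _ _ Hr).
    specialize (Hes k). specialize (Hhm k). specialize (Hpos k). specialize (Hge1 k).
    assert (Rabs t < 1).
    { rewrite E2 in Hes. apply (Rmult_lt_reg_r (er (s k))); auto. lra. }
    rewrite E1 in Hhm. assert (Rabs t * ht (s k) < 1 * ht (s k)) by (apply Rmult_lt_compat_r; lra).
    lra. }
  destruct m as [|[|m]]; auto. lia.
Qed.

Lemma span3 n V : lin_indep n 2 V -> ~ lin_indep n 3 V ->
  exists al be, forall i, (i <= n)%nat -> rv (V 2%nat) i = al * rv (V 0%nat) i + be * rv (V 1%nat) i.
Proof.
  intros H2 H3. unfold lin_indep in H3.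
  apply not_all_ex_not in H3. destruct H3 as [c Hc].
  apply imply_to_and in Hc. destruct Hc as [Hc Hnz].
  apply not_all_ex_not in Hnz. destruct Hnz as [k Hk]. apply imply_to_and in Hk. destruct Hk as [Hk Hck].
  assert (Hc2 : c 2%nat <> 0).
  { intros Hz. apply Hck. assert (Hz' : forall m, (m < 2)%nat -> c m = 0).
    { apply H2. intros i Hi. specialize (Hc i Hi). rewrite rsum_3 in Hc. rewrite rsum_2. rewrite Hz in Hc. lra. }
    destruct k as [|[|[|k]]]; try (apply Hz'; lia); auto; lia. }
  exists (- c 0%nat / c 2%nat), (- c 1%nat / c 2%nat). intros i Hi.
  specialize (Hc i Hi). rewrite rsum_3 in Hc. unfold rv.
  apply (Rmult_eq_reg_l (c 2%nat)); auto. field_simplify; auto. lra.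
Qed.

Lemma span_all n s K : (forall k, lin_indep n 2 (shift s k)) ->
  (forall k, (K <= k)%nat -> ~ lin_indep n 3 (shift s k)) ->
  forall k, (K <= k)%nat -> exists a b, forall i, (i <= n)%nat ->
    rv (s k) i = a * rv (s K) i + b * rv (s (S K)) i.
Proof.
  intros H2 H3.
  assert (Hm : forall m, (exists a b, forall i, (i <= n)%nat -> rv (s (K + m)%nat) i = a * rv (s K) i + b * rv (s (S K)) i) /\
                         (exists a b, forall i, (i <= n)%nat -> rv (s (S (K + m))) i = a * rv (s K) i + b * rv (s (S K)) i)).
  { induction m.
    - rewrite Nat.add_0_r. split; [exists 1, 0|exists 0, 1]; intros; ring.
    - destruct IHm as [[a1 [b1 E1]] [a2 [b2 E2]]]. split.
      + exists a2, b2. rewrite Nat.add_succ_r. auto.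
      + destruct (span3 n (shift s (K + m)) (H2 _) (H3 (K + m)%nat ltac:(lia))) as [al [be E]].
        exists (al * a1 + be * a2), (al * b1 + be * b2). intros i Hi.
        unfold shift in E. specialize (E i Hi).
        replace (K + m + 2)%nat with (S (K + S m)) in E by lia.
        replace (K + m + 0)%nat with (K + m)%nat in E by lia.
        replace (K + m + 1)%nat with (S (K + m)) in E by lia.
        rewrite E, E1, E2 by auto. ring. }
  intros k Hk. replace k with (K + (k - K))%nat by lia. apply Hm.
Qed.


Fixpoint zmaxf (f : nat -> Z) (m : nat) : Z :=
  match m with O => 0%Z | S p => Z.max (zmaxf f p) (f p) end.

Lemma Rmax_IZR a b : Rmax (IZR a) (IZR b) = IZR (Z.max a b).
Proof.
  destruct (Z.max_spec a b) as [[H1 H2]|[H1 H2]]; rewrite H2.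
  apply Rmax_right. apply IZR_le; lia. apply Rmax_left. apply IZR_le; lia.
Qed.

Lemma rmax_IZR g m : rmax (fun i => IZR (g i)) m = IZR (zmaxf g m).
Proof. induction m; simpl; auto. rewrite IHm. apply Rmax_IZR. Qed.

Lemma zmaxf_ge0 g m : (0 <= zmaxf g m)%Z.
Proof. induction m; simpl; lia. Qed.

Definition hZ (n : nat) (v : zvec) : Z := zmaxf (fun i => Z.abs (v i)) (S n).

Lemma height_hZ n v : height n v = IZR (hZ n v).
Proof.
  unfold height, hZ. rewrite <- rmax_IZR. apply rmax_ext. intros. apply Rabs_Zabs.
Qed.

Definition hN (n : nat) (v : zvec) : nat := Z.to_nat (hZ n v).

Lemma hN_lt n u v : height n u < height n v -> (hN n u < hN n v)%nat.
Proof.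
  rewrite !height_hZ. intros H. apply lt_IZR in H. unfold hN.
  pose proof (zmaxf_ge0 (fun i => Z.abs (u i)) (S n)). unfold hZ in *. lia.
Qed.

Lemma Q2R_inj z : Q2R (inject_Z z) = IZR z.
Proof. unfold Q2R, inject_Z. simpl. field. Qed.

Lemma Qindep_L n zeta u : Q_lin_indep_1 n zeta -> nonzero n u -> linform n zeta u <> 0.
Proof.
  intros HQ [i [Hi Hu]] HL. apply Hu.
  destruct (HQ (inject_Z (u 0%nat)) (fun i => inject_Z (u (S i)))) as [H0 H1].
  { rewrite Q2R_inj. rewrite <- HL. unfold linform. f_equal. apply rsum_ext.
    intros; rewrite Q2R_inj; ring. }
  rewrite Q2R_inj in H0. destruct i as [|i]. apply eq_IZR; auto.
  specialize (H1 i ltac:(lia)). rewrite Q2R_inj in H1. apply eq_IZR; auto.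
Qed.

Lemma linform_ext n zeta u v : (forall i, (i <= n)%nat -> u i = v i) -> linform n zeta u = linform n zeta v.
Proof.
  intros H. rewrite (linform_lin2 n zeta u v v 1 0). ring.
  intros i Hi. unfold rv. rewrite H by auto. ring.
Qed.

Lemma height_ext n u v : (forall i, (i <= n)%nat -> u i = v i) -> height n u = height n v.
Proof. intros H. rewrite (height_scal n u v 1). rewrite Rabs_R1; ring.
  intros i Hi. unfold rv. rewrite H by auto. ring. Qed.

Lemma Rabs_m1' : Rabs (-1) = 1.
Proof. rewrite Rabs_left; lra. Qed.

Lemma sign_lin n zeta u v : same_up_to_sign n u v ->
  height n u = height n v /\ Rabs (linform n zeta u) = Rabs (linform n zeta v).
Proof.
  intros [H|H].
  - split. apply height_ext; auto. rewrite (linform_ext n zeta u v); auto.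
  - assert (Hr : forall i, (i <= n)%nat -> rv u i = -1 * rv v i).
    { intros i Hi. unfold rv. rewrite H by auto. rewrite opp_IZR. ring. }
    split. rewrite (height_scal n u v (-1)) by auto. rewrite Rabs_m1'; ring.
    rewrite (linform_scal n zeta u v (-1)) by auto. rewrite Rabs_mult, Rabs_m1'; ring.
Qed.

Lemma scal_height n : scal_ok n (height n).
Proof. intros u v t H. apply height_scal; auto. Qed.

Lemma scal_L n zeta : scal_ok n (fun v => Rabs (linform n zeta v)).
Proof. intros u v t H. simpl. rewrite (linform_scal n zeta u v t) by auto. apply Rabs_mult. Qed.

Definition infinite (S : nat -> Prop) : Prop := forall K, exists k, (K <= k)%nat /\ S k.

Lemma inf_pigeon (f : nat -> Z) a m : forall (Sp : nat -> Prop), infinite Sp ->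
  (forall k, Sp k -> (a <= f k <= a + Z.of_nat m)%Z) ->
  exists z, infinite (fun k => Sp k /\ f k = z).
Proof.
  induction m; intros Sp HS Hb.
  - exists a. intros K. destruct (HS K) as [k [Hk Sk]]. exists k. split; auto. split; auto.
    specialize (Hb k Sk). lia.
  - destruct (classic (infinite (fun k => Sp k /\ f k = (a + Z.of_nat (Datatypes.S m))%Z))) as [Hi|Hi].
    + eexists; eauto.
    + unfold infinite in Hi. apply not_all_ex_not in Hi. destruct Hi as [K0 HK0].
      destruct (IHm (fun k => Sp k /\ (K0 <= k)%nat)) as [z Hz].
      * intros K. destruct (HS (Nat.max K K0)) as [k [Hk Sk]]. exists k. split. lia. split; auto. lia.
      * intros k [Sk Hk]. specialize (Hb k Sk). split. lia.
        destruct (Z.eq_dec (f k) (a + Z.of_nat (Datatypes.S m))%Z).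
        { exfalso. apply HK0. exists k. auto. }
        lia.
      * exists z. intros K. destruct (Hz K) as [k [Hk [[Sk _] E]]]. exists k. auto.
Qed.

Lemma inf_coords (s : nat -> zvec) (Bz : Z) : (0 <= Bz)%Z -> (forall k i, (Z.abs (s k i) <= Bz)%Z) ->
  forall m, exists Sp, infinite Sp /\ exists v : zvec, forall k, Sp k -> forall i, (i < m)%nat -> s k i = v i.
Proof.
  intros HB Hb m. induction m.
  - exists (fun _ => True). split. intros K; exists K; auto. exists (fun _ => 0%Z). intros; lia.
  - destruct IHm as [Sp [HS [v Hv]]].
    destruct (inf_pigeon (fun k => s k m) (- Bz) (Z.to_nat (2 * Bz)) Sp HS) as [z Hz].
    { intros k _. specialize (Hb k m). lia. }
    exists (fun k => Sp k /\ s k m = z). split; auto.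
    exists (fun i => if Nat.eqb i m then z else v i). intros k [Sk Ek] i Hi.
    destruct (Nat.eqb_spec i m). subst; auto. apply Hv; auto. lia.
Qed.

Lemma bounded_noninj n (s : nat -> zvec) B : (forall k, height n (s k) <= B) ->
  exists k1 k2, (k1 < k2)%nat /\ forall i, (i <= n)%nat -> s k1 i = s k2 i.
Proof.
  intros HB.
  set (s' := fun k i => if Nat.leb i n then s k i else 0%Z).
  set (Bz := Z.max 0 (up B)).
  assert (Hb : forall k i, (Z.abs (s' k i) <= Bz)%Z).
  { intros k i. unfold s'. destruct (Nat.leb_spec i n).
    - assert (H1 := height_ge n (s k) i H). specialize (HB k).
      rewrite Rabs_Zabs in H1. destruct (archimed B) as [Hu _].
      assert (IZR (Z.abs (s k i)) < IZR (up B)) by lra. apply lt_IZR in H0. unfold Bz. lia.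
    - unfold Bz; lia. }
  destruct (inf_coords s' Bz ltac:(unfold Bz; lia) Hb (S n)) as [Sp [HS [v Hv]]].
  destruct (HS 0%nat) as [k1 [_ S1]]. destruct (HS (Datatypes.S k1)) as [k2 [H2 S2]].
  exists k1, k2. split. lia. intros i Hi.
  assert (E1 := Hv k1 S1 i ltac:(lia)). assert (E2 := Hv k2 S2 i ltac:(lia)).
  unfold s' in E1, E2. destruct (Nat.leb_spec i n); [|lia]. congruence.
Qed.

Lemma strict_chain (g : nat -> R) : (forall k, g (S k) < g k) -> forall j j', (j < j')%nat -> g j' < g j.
Proof.
  intros H j j' Hj. induction Hj. apply H. eapply Rlt_trans; [apply H|]; auto.
Qed.

Lemma mono_chain (g : nat -> R) : (forall k, g k <= g (S k)) -> forall j j', (j <= j')%nat -> g j <= g j'.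
Proof.
  intros H j j' Hj. induction Hj. lra. eapply Rle_trans; [|apply H]; auto.
Qed.

Lemma lin_unbounded n zeta (s : nat -> zvec) :
  (forall k, Rabs (linform n zeta (s (S k))) < Rabs (linform n zeta (s k))) ->
  forall B, exists k, B < height n (s k).
Proof.
  intros Hs B. apply NNPP. intros Hn.
  assert (HB : forall k, height n (s k) <= B).
  { intros k. destruct (Rle_dec (height n (s k)) B); auto. exfalso. apply Hn. exists k. lra. }
  destruct (bounded_noninj n s B HB) as [k1 [k2 [Hk E]]].
  assert (Hlt := strict_chain (fun k => Rabs (linform n zeta (s k))) Hs k1 k2 Hk). simpl in Hlt.
  rewrite (linform_ext n zeta (s k1) (s k2)) in Hlt by auto. lra.
Qed.

Lemma bestseq_SeqH n zeta bv : Q_lin_indep_1 n zeta -> best_approx_seq n zeta bv ->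
  SeqH n (height n) (fun v => Rabs (linform n zeta v)) bv.
Proof.
  intros HQ [Hba [Henum Hmon]].
  assert (Hhm : forall k, height n (bv k) <= height n (bv (S k))) by (intro k; apply Hmon).
  assert (Hes : forall k, Rabs (linform n zeta (bv (S k))) < Rabs (linform n zeta (bv k))) by (intro k; apply Hmon).
  repeat split; auto.
  - intros k u Hu Hh. destruct (Rle_dec (Rabs (linform n zeta (bv k))) (Rabs (linform n zeta u))) as [|Hlt]; auto.
    exfalso.
    destruct (min_exists (hN n) (fun w => nonzero n w /\ height n w < height n (bv (S k)) /\
                Rabs (linform n zeta w) < Rabs (linform n zeta (bv k)))) as [w [[Hw1 [Hw2 Hw3]] Hmin]].
    { exists u. repeat split; auto. lra. }
    assert (Hbw : best_approx n zeta w).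
    { split; auto. intros u' Hu' Hh'.
      destruct (Rlt_dec (Rabs (linform n zeta w)) (Rabs (linform n zeta u'))) as [|Hn]; auto.
      exfalso. assert (Hm := Hmin u' ltac:(repeat split; auto; lra)). apply hN_lt in Hh'. lia. }
    destruct (Henum w Hbw) as [j Hj]. destruct (sign_lin n zeta w (bv j) Hj) as [E1 E2].
    destruct (Compare_dec.le_lt_dec j k) as [Hjk|Hjk].
    + assert (Hm := mono_chain (fun k => - Rabs (linform n zeta (bv k))) ltac:(intro; simpl; specialize (Hes k0); lra) j k Hjk).
      simpl in Hm. lra.
    + assert (Hm := mono_chain (fun k => height n (bv k)) Hhm (S k) j ltac:(lia)). simpl in Hm. lra.
  - apply (lin_unbounded n zeta); auto.
  - intros k. apply Rabs_pos_lt. apply Qindep_L; auto. apply Hba.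
  - intros k. apply height_ge1. apply Hba.
  - intros k. apply Hba.
Qed.


Definition fl (r : R) : Z := (up r - 1)%Z.

Lemma fl_spec r : IZR (fl r) <= r < IZR (fl r) + 1.
Proof. unfold fl. rewrite minus_IZR. destruct (archimed r). simpl. lra. Qed.

Lemma fl_ge0 r : 0 <= r -> (0 <= fl r)%Z.
Proof. intros H. destruct (fl_spec r). assert (IZR (-1) < IZR (fl r)) by lra. apply lt_IZR in H2. lia. Qed.

Lemma rsum_two f m : (2 <= m)%nat -> (forall i, (2 <= i)%nat -> f i = 0) -> rsum f m = f 0%nat + f 1%nat.
Proof. intros Hm H. rewrite (rsum_extend_zero f 2 m); auto. simpl; ring. Qed.

Lemma noDup_collision {A B} (f : A -> B) l : NoDup l -> ~ NoDup (map f l) ->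
  exists x y, In x l /\ In y l /\ x <> y /\ f x = f y.
Proof.
  intros Hl Hm. apply NNPP. intros Hn. apply Hm. apply NoDup_map_NoDup_ForallPairs; auto.
  intros x y Hx Hy Hf. apply NNPP. intros Hxy. apply Hn. exists x, y. auto.
Qed.

Lemma dirichlet n zeta N : (2 <= n)%nat -> (1 <= N)%nat ->
  exists w, nonzero n w /\ height n w <= (1 + Rabs (zeta 0%nat) + Rabs (zeta 1%nat)) * INR N /\
    Rabs (linform n zeta w) <= / (INR N) ^ 2.
Proof.
  intros Hn HN.
  set (Q := S N). set (M := (Q * Q - 1)%nat).
  set (p := fun c => INR (c / Q) * zeta 0%nat + INR (c mod Q) * zeta 1%nat).
  set (fr := fun c => p c - IZR (fl (p c))).
  assert (Hfr : forall c, 0 <= fr c < 1) by (intro c; unfold fr; pose proof (fl_spec (p c)); lra).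
  set (idx := fun c => Z.to_nat (fl (INR M * fr c))).
  assert (HM : (1 <= M)%nat) by (unfold M, Q; nia).
  assert (HMr : INR N ^ 2 <= INR M).
  { unfold M, Q. rewrite minus_INR by nia. rewrite mult_INR, S_INR. simpl. pose proof (pos_INR N). nra. }
  assert (HNr : 1 <= INR N) by (apply (le_INR 1); auto).
  set (l := seq 0 (Q * Q)).
  assert (Hnd : ~ NoDup (map idx l)).
  { intros Hnd. assert (Hinc : incl (map idx l) (seq 0 M)).
    { intros x Hx. apply in_map_iff in Hx. destruct Hx as [c [Hc _]]. subst x. apply in_seq.
      split. lia. unfold idx.
      assert (H0 := Hfr c).
      assert (Hf := fl_spec (INR M * fr c)).
      assert (Hge := fl_ge0 (INR M * fr c) ltac:(pose proof (pos_INR M); nra)).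
      assert (IZR (fl (INR M * fr c)) < IZR (Z.of_nat M)).
      { rewrite <- INR_IZR_INZ. assert (1 <= INR M) by (apply (le_INR 1); lia). nra. }
      apply lt_IZR in H. lia. }
    apply NoDup_incl_length in Hinc; auto. rewrite length_map, !length_seq in Hinc.
    unfold l in Hinc. rewrite length_seq in Hinc. unfold M, Q in Hinc. nia. }
  destruct (noDup_collision idx l (seq_NoDup _ _) Hnd) as [c [c' [Hc [Hc' [Hcc Hidx]]]]].
  apply in_seq in Hc. apply in_seq in Hc'.
  unfold idx in Hidx.
  assert (Hfe : fl (INR M * fr c) = fl (INR M * fr c')).
  { apply Znat.Z2Nat.inj; auto; apply fl_ge0; pose proof (pos_INR M); pose proof (Hfr c); pose proof (Hfr c'); nra. }
  assert (Hd : Rabs (fr c - fr c') < / INR M).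
  { assert (Hf1 := fl_spec (INR M * fr c)). assert (Hf2 := fl_spec (INR M * fr c')).
    rewrite Hfe in Hf1. assert (Hlt : Rabs (INR M * fr c - INR M * fr c') < 1).
    { apply Rabs_def1; lra. }
    rewrite <- Rmult_minus_distr_l, Rabs_mult, Rabs_right in Hlt by (apply Rle_ge, pos_INR).
    assert (0 < INR M) by (apply (lt_INR 0); lia).
    apply (Rmult_lt_reg_l (INR M)); auto. rewrite Rinv_r by lra. lra. }
  set (a := (c / Q)%nat). set (a' := (c' / Q)%nat). set (b := (c mod Q)%nat). set (b' := (c' mod Q)%nat).
  assert (Ha : (a <= N)%nat) by (unfold a; assert (c / Q < Q)%nat by (apply Nat.Div0.div_lt_upper_bound; lia); unfold Q in *; lia).
  assert (Ha' : (a' <= N)%nat) by (unfold a'; assert (c' / Q < Q)%nat by (apply Nat.Div0.div_lt_upper_bound; lia); unfold Q in *; lia).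
  assert (Hb : (b <= N)%nat) by (unfold b; assert (c mod Q < Q)%nat by (apply Nat.mod_upper_bound; lia); unfold Q in *; lia).
  assert (Hb' : (b' <= N)%nat) by (unfold b'; assert (c' mod Q < Q)%nat by (apply Nat.mod_upper_bound; lia); unfold Q in *; lia).
  set (w := fun i => match i with
                     | O => (- (fl (p c) - fl (p c')))%Z
                     | 1%nat => (Z.of_nat a - Z.of_nat a')%Z
                     | 2%nat => (Z.of_nat b - Z.of_nat b')%Z
                     | _ => 0%Z end).
  exists w. split; [|split].
  - destruct (Nat.eq_dec a a') as [Ea|Ea].
    + exists 2%nat. split; auto. simpl. intros E. apply Hcc.
      rewrite (Nat.div_mod_eq c Q), (Nat.div_mod_eq c' Q). fold a a' b b'. rewrite Ea. lia.
    + exists 1%nat. split. lia. simpl. lia.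
  - apply height_le. pose proof (Rabs_pos (zeta 0%nat)); pose proof (Rabs_pos (zeta 1%nat)); nra.
    intros i Hi. pose proof (Rabs_pos (zeta 0%nat)); pose proof (Rabs_pos (zeta 1%nat)).
    assert (HAa : Rabs (INR a - INR a') <= INR N).
    { apply Rabs_le. pose proof (le_INR _ _ Ha); pose proof (le_INR _ _ Ha'); pose proof (pos_INR a); pose proof (pos_INR a'); lra. }
    assert (HBb : Rabs (INR b - INR b') <= INR N).
    { apply Rabs_le. pose proof (le_INR _ _ Hb); pose proof (le_INR _ _ Hb'); pose proof (pos_INR b); pose proof (pos_INR b'); lra. }
    destruct i as [|[|[|i]]]; simpl.
    + rewrite opp_IZR, minus_IZR, Rabs_Ropp.
      assert (F1 := fl_spec (p c)). assert (F2 := fl_spec (p c')).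
      assert (Hp : Rabs (p c - p c') <= INR N * (Rabs (zeta 0%nat) + Rabs (zeta 1%nat))).
      { unfold p. fold a a' b b'.
        replace (INR a * zeta 0%nat + INR b * zeta 1%nat - (INR a' * zeta 0%nat + INR b' * zeta 1%nat))
          with ((INR a - INR a') * zeta 0%nat + (INR b - INR b') * zeta 1%nat) by ring.
        eapply Rle_trans. apply Rabs_triang. rewrite !Rabs_mult.
        assert (Rabs (INR a - INR a') * Rabs (zeta 0%nat) <= INR N * Rabs (zeta 0%nat)) by (apply Rmult_le_compat_r; auto).
        assert (Rabs (INR b - INR b') * Rabs (zeta 1%nat) <= INR N * Rabs (zeta 1%nat)) by (apply Rmult_le_compat_r; auto).
        lra. }
      assert (Rabs (IZR (fl (p c)) - IZR (fl (p c'))) <= Rabs (p c - p c') + 1).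
      { replace (IZR (fl (p c)) - IZR (fl (p c'))) with ((p c - p c') + ((IZR (fl (p c)) - IZR (fl (p c'))) - (p c - p c'))) by ring.
        eapply Rle_trans; [apply Rabs_triang|]. apply Rplus_le_compat_l. apply Rabs_le; lra. }
      nra.
    + rewrite minus_IZR, <- !INR_IZR_INZ. nra.
    + rewrite minus_IZR, <- !INR_IZR_INZ. nra.
    + rewrite Rabs_R0. nra.
  - assert (HL : linform n zeta w = fr c - fr c').
    { unfold linform. rewrite rsum_two; auto.
      2:{ intros i Hi. destruct i as [|[|i]]; try lia. simpl. ring. }
      simpl. rewrite opp_IZR, !minus_IZR, <- !INR_IZR_INZ. unfold fr, p. fold a a' b b'. ring. }
    rewrite HL. left. eapply Rlt_le_trans; eauto. apply Rinv_le_contravar; auto.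
    apply pow_lt; lra.
Qed.


Lemma nat_floor x : 0 <= x -> exists N : nat, INR N <= x < INR N + 1.
Proof.
  intros Hx. exists (Z.to_nat (fl x)). rewrite INR_IZR_INZ, Znat.Z2Nat.id by (apply fl_ge0; auto).
  apply fl_spec.
Qed.

Lemma lin_small_LH n zeta s : (2 <= n)%nat ->
  SeqH n (height n) (fun v => Rabs (linform n zeta v)) s ->
  forall eps, 0 < eps -> forall K, exists k, (K <= k)%nat /\
    Rabs (linform n zeta (s k)) * height n (s (S k)) < eps.
Proof.
  intros Hn Hs eps Heps K.
  set (C0 := 1 + Rabs (zeta 0%nat) + Rabs (zeta 1%nat)).
  assert (HC0 : 1 <= C0) by (unfold C0; pose proof (Rabs_pos (zeta 0%nat)); pose proof (Rabs_pos (zeta 1%nat)); lra).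
  destruct (seq_unb _ _ _ s Hs (Rmax (4 * C0) (16 * C0 ^ 2 / eps + 1)) K) as [k [Hk HH]].
  exists k. split; auto.
  set (H := height n (s (S k))).
  assert (HT : Rmax (4 * C0) (16 * C0 ^ 2 / eps + 1) < H) by (apply HH; lia).
  assert (HT1 : 4 * C0 < H) by (eapply Rle_lt_trans; [apply Rmax_l|]; eauto).
  assert (HT2 : 16 * C0 ^ 2 / eps + 1 < H) by (eapply Rle_lt_trans; [apply Rmax_r|]; eauto).
  set (x := H / (2 * C0)).
  assert (Hx2 : 2 <= x) by (unfold x; apply (Rmult_le_reg_r (2 * C0)); [lra|]; field_simplify; lra).
  destruct (nat_floor x) as [N [HN1 HN2]]. lra.
  assert (HN : (1 <= N)%nat).
  { destruct N. simpl in HN2. lra. lia. }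
  assert (HNr : 1 <= INR N) by (apply (le_INR 1); auto).
  destruct (dirichlet n zeta N Hn HN) as [w [Hw [Hwh HwL]]].
  fold C0 in Hwh.
  destruct Hs as (_ & _ & Hb & _).
  assert (Hlt : height n w < H).
  { eapply Rle_lt_trans; eauto. apply (Rle_lt_trans _ (C0 * x)). apply Rmult_le_compat_l; lra.
    replace (C0 * x) with (H / 2) by (unfold x; field; lra). lra. }
  assert (HL := Hb k w Hw Hlt). simpl in HL.
  assert (HNx : H / (4 * C0) < INR N).
  { assert (Hx : x / 2 < INR N) by lra.
    replace (H / (4 * C0)) with (x / 2) by (unfold x; field; lra). exact Hx. }
  assert (HNpos : 0 < H / (4 * C0)) by (apply Rdiv_lt_0_compat; lra).
  assert (Hinv : / INR N ^ 2 < 16 * C0 ^ 2 / H ^ 2).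
  { replace (16 * C0 ^ 2 / H ^ 2) with (/ (H / (4 * C0)) ^ 2) by (field; lra).
    apply Rinv_lt_contravar. apply Rmult_lt_0_compat; apply pow_lt; lra. simpl. rewrite !Rmult_1_r. apply Rmult_le_0_lt_compat; lra. }
  assert (Hle : Rabs (linform n zeta (s k)) < 16 * C0 ^ 2 / H ^ 2) by lra.
  assert (Hpos : 0 < H) by lra.
  apply (Rmult_lt_compat_r H) in Hle; auto.
  replace (16 * C0 ^ 2 / H ^ 2 * H) with (16 * C0 ^ 2 / H) in Hle by (field; lra).
  assert (16 * C0 ^ 2 / H < eps).
  { apply (Rmult_lt_reg_r H); auto. field_simplify; try lra.
    assert (16 * C0 ^ 2 / eps < H) by lra.
    apply (Rmult_lt_compat_r eps) in H0; auto. field_simplify in H0; lra. }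
  lra.
Qed.

Lemma minor_exists n V : lin_indep n 2 V -> exists r t, (r <= n)%nat /\ (t <= n)%nat /\
  (V 0%nat r * V 1%nat t - V 0%nat t * V 1%nat r)%Z <> 0%Z.
Proof.
  intros H2. apply NNPP. intros Hn.
  assert (H1 : lin_indep n 1 V) by (eapply lin_indep_le; [|eauto]; lia).
  destruct (lin_indep_1_nonzero n V H1) as [r [Hr Hv]].
  assert (Hc := H2 (fun m => if Nat.eqb m 0 then IZR (V 1%nat r) else - IZR (V 0%nat r))).
  assert (E : (fun m : nat => if Nat.eqb m 0 then IZR (V 1%nat r) else - IZR (V 0%nat r)) 1%nat = 0).
  { apply Hc; [|lia]. intros i Hi. rewrite rsum_2. simpl.
    assert (Hm : (V 0%nat r * V 1%nat i - V 0%nat i * V 1%nat r)%Z = 0%Z).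
    { apply NNPP. intro. apply Hn. exists r, i. auto. }
    apply (f_equal IZR) in Hm. rewrite minus_IZR, !mult_IZR in Hm. lra. }
  simpl in E. apply Hv. apply eq_IZR. lra.
Qed.

Lemma Rabs_sub_le a b : Rabs (a - b) <= Rabs a + Rabs b.
Proof. unfold Rminus. eapply Rle_trans. apply Rabs_triang. rewrite Rabs_Ropp. lra. Qed.

Lemma lin_triple n zeta s : (2 <= n)%nat -> Q_lin_indep_1 n zeta ->
  SeqH n (height n) (fun v => Rabs (linform n zeta v)) s ->
  forall K, exists k, (K <= k)%nat /\ lin_indep n 3 (shift s k).
Proof.
  intros Hn HQ Hs K. apply NNPP. intros Hno.
  assert (H3 : forall k, (K <= k)%nat -> ~ lin_indep n 3 (shift s k)) by (intros k Hk Hl; apply Hno; eauto).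
  assert (H2 := indep2_consec n _ _ s Hs (scal_height n) (scal_L n zeta)).
  assert (Hsp := span_all n s K H2 H3).
  destruct (minor_exists n (shift s K) (H2 K)) as [r [t [Hr [Ht HM]]]].
  unfold shift in HM. rewrite Nat.add_0_r, Nat.add_1_r in HM.
  set (p := s K) in *. set (q := s (S K)) in *.
  set (Mr := IZR (p r * q t - p t * q r)).
  assert (HMr : Mr <> 0) by (unfold Mr; intro E; apply HM; apply eq_IZR; auto).
  assert (HMr' : Mr = rv p r * rv q t - rv p t * rv q r) by (unfold Mr, rv; rewrite minus_IZR, !mult_IZR; ring).
  assert (HLp : linform n zeta p <> 0) by (apply Qindep_L; auto; apply Hs).
  assert (Hp1 : 1 <= height n p) by (apply height_ge1; apply Hs).
  set (c0 := Rabs (linform n zeta p) / (4 * height n p)).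
  assert (Hc0 : 0 < c0) by (unfold c0; apply Rdiv_lt_0_compat; [apply Rabs_pos_lt; auto|lra]).
  destruct (lin_small_LH n zeta s Hn Hs c0 Hc0 K) as [k [Hk Hsm]].
  destruct (Hsp k Hk) as [a [b Eab]]. destruct (Hsp (S k) ltac:(lia)) as [a' [b' Eab']].
  set (v := s k) in *. set (v' := s (S k)) in *.
  assert (I1 : Mr * b = rv p r * rv v t - rv p t * rv v r) by (rewrite HMr', (Eab r), (Eab t) by auto; ring).
  assert (I2 : Mr * b' = rv p r * rv v' t - rv p t * rv v' r) by (rewrite HMr', (Eab' r), (Eab' t) by auto; ring).
  set (Dz := (v r * v' t - v t * v' r)%Z).
  assert (ID : IZR Dz = (a * b' - a' * b) * Mr).
  { unfold Dz. rewrite minus_IZR, !mult_IZR. fold (rv v r) (rv v t) (rv v' r) (rv v' t).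
    rewrite HMr', (Eab r), (Eab t), (Eab' r), (Eab' t) by auto. ring. }
  assert (HD : Dz <> 0%Z).
  { intros HDz. rewrite HDz in ID. simpl in ID.
    assert (Hab : a * b' - a' * b = 0).
    { symmetry in ID. apply Rmult_integral in ID. destruct ID; [lra|]. contradiction. }
    assert (Hind := H2 k). unfold shift in Hind.
    assert (Hk1 : forall c0 c1, (forall i, (i <= n)%nat -> c0 * rv v i + c1 * rv v' i = 0) -> c0 = 0 /\ c1 = 0).
    { intros x y Hxy. assert (Hc := Hind (fun m => if Nat.eqb m 0 then x else y)).
      assert (Hcs : forall i, (i <= n)%nat -> rsum (fun k0 => (if Nat.eqb k0 0 then x else y) * IZR (s (k + k0)%nat i)) 2 = 0).
      { intros i Hi. rewrite rsum_2. simpl. rewrite Nat.add_0_r, Nat.add_1_r. apply Hxy; auto. }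
      split; [apply (Hc Hcs 0%nat)|apply (Hc Hcs 1%nat)]; lia. }
    destruct (Hk1 b' (- b)) as [Hb1 Hb2].
    { intros i Hi. rewrite (Eab i), (Eab' i) by auto. replace (b' * (a * rv p i + b * rv q i) + - b * (a' * rv p i + b' * rv q i)) with ((a * b' - a' * b) * rv p i) by ring. rewrite Hab; ring. }
    destruct (Hk1 a' (- a)) as [Ha1 Ha2].
    { intros i Hi. rewrite (Eab i), (Eab' i) by auto. replace (a' * (a * rv p i + b * rv q i) + - a * (a' * rv p i + b' * rv q i)) with (- (a * b' - a' * b) * rv q i) by ring. rewrite Hab; ring. }
    destruct Hs as (_ & _ & _ & _ & _ & _ & Hnz). destruct (Hnz k) as [i [Hi Hvi]].
    apply Hvi. apply eq_IZR. fold v. change (rv v i = 0). rewrite Eab by auto. assert (a = 0) by lra. assert (b = 0) by lra. subst. ring. }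
  assert (HD1 : 1 <= Rabs (IZR Dz)) by (apply IZR_abs_ge1; auto).
  assert (EL := linform_lin2 n zeta v p q a b Eab).
  assert (EL' := linform_lin2 n zeta v' p q a' b' Eab').
  assert (Key : Mr * b' * linform n zeta v - Mr * b * linform n zeta v' = IZR Dz * linform n zeta p).
  { rewrite ID, EL, EL'. ring. }
  assert (Hs' := Hs). destruct Hs' as (Hhm & Hes & _).
  assert (Hvv : height n v <= height n v') by apply Hhm.
  assert (HLL : Rabs (linform n zeta v') <= Rabs (linform n zeta v)) by (left; apply Hes).
  assert (Bnd : forall u, Rabs (rv p r * rv u t - rv p t * rv u r) <= 2 * height n p * height n u).
  { intros u. eapply Rle_trans. apply Rabs_sub_le. rewrite !Rabs_mult.
    assert (A1 := height_ge n p r Hr). assert (A2 := height_ge n p t Ht).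
    assert (A3 := height_ge n u r Hr). assert (A4 := height_ge n u t Ht). unfold rv.
    assert (Rabs (IZR (p r)) * Rabs (IZR (u t)) <= height n p * height n u) by (apply Rmult_le_compat; auto using Rabs_pos).
    assert (Rabs (IZR (p t)) * Rabs (IZR (u r)) <= height n p * height n u) by (apply Rmult_le_compat; auto using Rabs_pos).
    lra. }
  assert (B1 := Bnd v). assert (B2 := Bnd v'). rewrite <- I1 in B1. rewrite <- I2 in B2.
  assert (Hfin : Rabs (linform n zeta p) <= 4 * height n p * height n v' * Rabs (linform n zeta v)).
  { apply (Rle_trans _ (Rabs (IZR Dz * linform n zeta p))).
    rewrite Rabs_mult. rewrite <- (Rmult_1_l (Rabs (linform n zeta p))) at 1. apply Rmult_le_compat_r; auto using Rabs_pos.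
    rewrite <- Key. eapply Rle_trans. apply Rabs_sub_le.
    rewrite (Rabs_mult (Mr * b') _), (Rabs_mult (Mr * b) _).
    assert (0 <= height n p) by lra.
    assert (Rabs (Mr * b') * Rabs (linform n zeta v) <= 2 * height n p * height n v' * Rabs (linform n zeta v))
      by (apply Rmult_le_compat_r; auto using Rabs_pos).
    assert (Rabs (Mr * b) * Rabs (linform n zeta v') <= 2 * height n p * height n v' * Rabs (linform n zeta v)).
    { apply Rmult_le_compat; auto using Rabs_pos. eapply Rle_trans; eauto.
      apply Rmult_le_compat_l; lra. }
    lra. }
  assert (c0 * (4 * height n p) <= Rabs (linform n zeta v) * height n v' * (4 * height n p)).
  { unfold c0. field_simplify; try lra. }
  apply Rmult_le_reg_r in H; [|lra]. fold v v' in Hsm. lra.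
Qed.


Definition e0 : zvec := fun i => if Nat.eqb i 0 then 1%Z else 0%Z.

Lemma e0_nonzero n : nonzero n e0.
Proof. exists 0%nat. split. lia. unfold e0. simpl. discriminate. Qed.

Lemma e0_height n : height n e0 <= 1.
Proof.
  apply height_le. lra. intros i Hi. unfold e0. destruct (Nat.eqb i 0); simpl;
  rewrite ?Rabs_R1, ?Rabs_R0; lra.
Qed.

Lemma e0_L n zeta : linform n zeta e0 = 1.
Proof.
  unfold linform. rewrite (rsum_ext _ (fun _ => 0)). rewrite rsum_zero. unfold e0. simpl. ring.
  intros i Hi. unfold e0. simpl. ring.
Qed.

Lemma hat0_of n ht er u : nonzero n u -> ht u <= 1 -> er u <= 1 -> ghat n ht er 1 0.
Proof.
  intros Hu Hh He. exists 1. split. lra. intros X HX. exists (fun _ => u). split.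
  apply lin_indep_1; auto. intros k Hk. split. lra.
  replace (- 0) with 0 by ring. rewrite Rpower_O by lra. auto.
Qed.

Lemma lin_hat0 n zeta : ghat n (height n) (fun v => Rabs (linform n zeta v)) 1 0.
Proof.
  apply (hat0_of n _ _ e0). apply e0_nonzero. apply e0_height.
  rewrite e0_L, Rabs_R1. lra.
Qed.

Definition lin_rel n zeta (v w : zvec) : Prop :=
  best_approx n zeta w /\ Rabs (linform n zeta w) < Rabs (linform n zeta v) /\
  height n v <= height n w /\
  (forall u, nonzero n u -> height n u < height n w -> Rabs (linform n zeta v) <= Rabs (linform n zeta u)).

Lemma lin_next_ex n zeta v : (2 <= n)%nat -> Q_lin_indep_1 n zeta -> best_approx n zeta v ->
  exists w, lin_rel n zeta v w.
Proof.
  intros Hn HQ [Hv Hvb].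
  set (Lv := Rabs (linform n zeta v)).
  assert (HLv : 0 < Lv) by (apply Rabs_pos_lt; apply Qindep_L; auto).
  destruct (nat_floor (/ Lv)) as [N0 [HN1 HN2]]. left; apply Rinv_0_lt_compat; auto.
  destruct (dirichlet n zeta (S N0) Hn ltac:(lia)) as [u [Hu [_ HuL]]].
  assert (HuLv : Rabs (linform n zeta u) < Lv).
  { eapply Rle_lt_trans; eauto. rewrite S_INR.
    assert (HN : 1 <= INR N0 + 1) by (pose proof (pos_INR N0); lra).
    assert (/ (INR N0 + 1) ^ 2 <= / (INR N0 + 1)).
    { apply Rinv_le_contravar. lra. simpl. nra. }
    assert (/ (INR N0 + 1) < Lv).
    { rewrite <- (Rinv_inv Lv). apply Rinv_lt_contravar. apply Rmult_lt_0_compat; [apply Rinv_0_lt_compat|]; lra. lra. }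
    lra. }
  destruct (min_exists (hN n) (fun w => nonzero n w /\ Rabs (linform n zeta w) < Lv)) as [w [[Hw1 Hw2] Hmin]].
  { exists u; auto. }
  exists w. split; [split|split; [|split]]; auto.
  - intros u' Hu' Hh'. destruct (Rlt_dec (Rabs (linform n zeta w)) (Rabs (linform n zeta u'))) as [|Hno]; auto.
    exfalso. assert (Hm := Hmin u' ltac:(split; auto; lra)). apply hN_lt in Hh'. lia.
  - destruct (Rle_dec (height n v) (height n w)) as [|Hno]; auto. exfalso.
    assert (Hc := Hvb w Hw1 ltac:(lra)). fold Lv in Hc. lra.
  - intros u' Hu' Hh'. destruct (Rle_dec Lv (Rabs (linform n zeta u'))) as [|Hno]; auto.
    exfalso. assert (Hm := Hmin u' ltac:(split; auto; lra)). apply hN_lt in Hh'. lia.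
Qed.

Definition lin_step n zeta (v : zvec) : zvec := epsilon (inhabits v) (lin_rel n zeta v).

Definition lin_seq n zeta (k : nat) : zvec := Nat.iter k (lin_step n zeta) e0.

Lemma e0_best n zeta : best_approx n zeta e0.
Proof.
  split. apply e0_nonzero. intros u Hu Hh. exfalso.
  assert (H1 := height_ge1 n u Hu). assert (H2 := e0_height n). lra.
Qed.

Lemma lin_seq_props n zeta : (2 <= n)%nat -> Q_lin_indep_1 n zeta ->
  forall k, best_approx n zeta (lin_seq n zeta k) /\ lin_rel n zeta (lin_seq n zeta k) (lin_seq n zeta (S k)).
Proof.
  intros Hn HQ k. induction k.
  - split. apply e0_best. simpl. unfold lin_step. apply epsilon_spec. apply lin_next_ex; auto. apply e0_best.
  - destruct IHk as [_ Hr]. assert (Hb : best_approx n zeta (lin_seq n zeta (S k))) by apply Hr.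
    split; auto. change (lin_seq n zeta (S (S k))) with (lin_step n zeta (lin_seq n zeta (S k))).
    unfold lin_step. apply epsilon_spec. apply lin_next_ex; auto.
Qed.

Lemma lin_seq_SeqH n zeta : (2 <= n)%nat -> Q_lin_indep_1 n zeta ->
  SeqH n (height n) (fun v => Rabs (linform n zeta v)) (lin_seq n zeta).
Proof.
  intros Hn HQ. assert (H := lin_seq_props n zeta Hn HQ).
  repeat split.
  - intros k. apply (H k).
  - intros k. apply (H k).
  - intros k u Hu Hh. apply (H k); auto.
  - apply (lin_unbounded n zeta). intros k. apply (H k).
  - intros k. apply Rabs_pos_lt. apply Qindep_L; auto. apply (H k).
  - intros k. apply height_ge1. apply (H k).
  - intros k. apply (H k).
Qed.


Definition rnd (r : R) : Z := up (r - / 2).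

Lemma rnd_half r : Rabs (r - IZR (rnd r)) <= / 2.
Proof. unfold rnd. destruct (archimed (r - / 2)). apply Rabs_le. lra. Qed.

Lemma rnd_near r y : Rabs (r - IZR (rnd r)) <= Rabs (r - IZR y).
Proof.
  destruct (Z.eq_dec y (rnd r)) as [E|E]. subst; lra.
  assert (H := IZR_neq_gap y (rnd r) E). assert (H2 := rnd_half r).
  replace (IZR y - IZR (rnd r)) with ((r - IZR (rnd r)) - (r - IZR y)) in H by ring.
  assert (H3 := Rabs_triang (r - IZR (rnd r)) (- (r - IZR y))). rewrite Rabs_Ropp in H3.
  unfold Rminus at 1 in H. lra.
Qed.

Definition rvec (zeta : nat -> R) (x : Z) : zvec :=
  fun i => match i with O => x | S j => rnd (zeta j * IZR x) end.

Definition nearest n zeta (v : zvec) : Prop :=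
  forall i, (i < n)%nat -> forall y : Z,
    Rabs (zeta i * IZR (v 0%nat) - IZR (v (S i))) <= Rabs (zeta i * IZR (v 0%nat) - IZR y).

Lemma rvec_nearest n zeta x : nearest n zeta (rvec zeta x).
Proof. intros i Hi y. simpl. apply rnd_near. Qed.

Lemma nearest_half n zeta v : nearest n zeta v -> simdist n zeta v <= / 2.
Proof.
  intros H. apply simdist_le. lra. intros i Hi. eapply Rle_trans. apply (H i Hi (rnd (zeta i * IZR (v 0%nat)))).
  apply rnd_half.
Qed.

Lemma rvec_le n zeta u : simdist n zeta (rvec zeta (u 0%nat)) <= simdist n zeta u.
Proof.
  apply simdist_le. apply simdist_ge0. intros i Hi. simpl.
  eapply Rle_trans. apply rnd_near. apply simdist_ge; auto.
Qed.

Lemma nearest_same n zeta u v : nearest n zeta u -> nearest n zeta v -> Z.abs (u 0%nat) = Z.abs (v 0%nat) ->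
  simdist n zeta u <= simdist n zeta v.
Proof.
  intros Hu Hv E. apply simdist_le. apply simdist_ge0. intros i Hi.
  destruct (Z.eq_dec (u 0%nat) (v 0%nat)) as [E1|E1].
  - rewrite E1. eapply Rle_trans. rewrite <- E1. apply (Hu i Hi (v (S i))). rewrite E1. apply simdist_ge; auto.
  - assert (E2 : u 0%nat = (- v 0%nat)%Z) by lia.
    eapply Rle_trans. apply (Hu i Hi (- v (S i))%Z). rewrite E2, !opp_IZR.
    replace (zeta i * - IZR (v 0%nat) - - IZR (v (S i))) with (- (zeta i * IZR (v 0%nat) - IZR (v (S i)))) by ring.
    rewrite Rabs_Ropp. apply simdist_ge; auto.
Qed.

Lemma simdist_x0 n zeta u : nonzero n u -> u 0%nat = 0%Z -> 1 <= simdist n zeta u.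
Proof.
  intros [i [Hi Hu]] H0. destruct i as [|i]. contradiction.
  eapply Rle_trans; [|apply (simdist_ge n zeta u i); lia]. rewrite H0. simpl.
  replace (zeta i * 0 - IZR (u (S i))) with (- IZR (u (S i))) by ring. rewrite Rabs_Ropp.
  apply IZR_abs_ge1; auto.
Qed.

Lemma Qindep_sim n zeta u : (1 <= n)%nat -> Q_lin_indep_1 n zeta -> u 0%nat <> 0%Z -> 0 < simdist n zeta u.
Proof.
  intros Hn HQ Hu. destruct (simdist_ge0 n zeta u) as [|E]; auto. exfalso.
  assert (H := simdist_ge n zeta u 0 ltac:(lia)). rewrite <- E in H.
  assert (H0 : zeta 0%nat * IZR (u 0%nat) - IZR (u 1%nat) = 0).
  { destruct (Req_dec (zeta 0%nat * IZR (u 0%nat) - IZR (u 1%nat)) 0) as [|Hne]; auto.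
    pose proof (Rabs_pos_lt _ Hne). lra. }
  destruct (HQ (inject_Z (- u 1%nat)) (fun i => if Nat.eqb i 0 then inject_Z (u 0%nat) else 0%Q)) as [_ H1].
  { rewrite (rsum_single _ n 0); [| lia |].
    2:{ intros i Hi Hi0. destruct (Nat.eqb_spec i 0); [lia|]. unfold Q2R; simpl; ring. }
    simpl. rewrite !Q2R_inj, opp_IZR. lra. }
  specialize (H1 0%nat ltac:(lia)). simpl in H1. rewrite Q2R_inj in H1. apply Hu. apply eq_IZR; auto.
Qed.

Lemma sign_sim n zeta u v : same_up_to_sign n u v ->
  Rabs (IZR (u 0%nat)) = Rabs (IZR (v 0%nat)) /\ simdist n zeta u = simdist n zeta v.
Proof.
  intros [H|H].
  - rewrite (H 0%nat) by lia. split; auto. rewrite (simdist_scal n zeta u v 1). rewrite Rabs_R1; ring.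
    intros i Hi. unfold rv. rewrite H by auto. ring.
  - rewrite (H 0%nat) by lia. rewrite opp_IZR, Rabs_Ropp. split; auto.
    rewrite (simdist_scal n zeta u v (-1)). rewrite Rabs_m1'; ring.
    intros i Hi. unfold rv. rewrite H by auto. rewrite opp_IZR. ring.
Qed.

Lemma scal_x n : scal_ok n (fun v => Rabs (IZR (v 0%nat))).
Proof. intros u v t H. simpl. fold (rv u 0) (rv v 0). rewrite H by lia. apply Rabs_mult. Qed.

Lemma scal_sim n zeta : scal_ok n (simdist n zeta).
Proof. intros u v t H. apply simdist_scal; auto. Qed.

Lemma abs_lt_nat a b : Rabs (IZR a) < Rabs (IZR b) <-> (Z.abs_nat a < Z.abs_nat b)%nat.
Proof.
  rewrite !Rabs_Zabs. split; intros H.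
  - apply lt_IZR in H. lia.
  - apply IZR_lt. lia.
Qed.

Lemma sim_best_nearest n zeta v : sim_best_approx n zeta v -> nearest n zeta v.
Proof. intros [_ [H _]]. exact H. Qed.

Lemma sim_min n zeta (Qp : nat -> Prop) d : d <= / 2 ->
  (forall a b, (a <= b)%nat -> Qp b -> Qp a) ->
  (exists u, nonzero n u /\ simdist n zeta u < d /\ Qp (Z.abs_nat (u 0%nat))) ->
  exists w, sim_best_approx n zeta w /\ simdist n zeta w < d /\ Qp (Z.abs_nat (w 0%nat)) /\
    forall u, nonzero n u -> (Z.abs_nat (u 0%nat) < Z.abs_nat (w 0%nat))%nat -> d <= simdist n zeta u.
Proof.
  intros Hd HQ Hex.
  destruct (min_exists (fun w => Z.abs_nat (w 0%nat)) (fun w => nonzero n w /\ simdist n zeta w < d /\ Qp (Z.abs_nat (w 0%nat))) Hex)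
    as [w [[Hw1 [Hw2 Hw3]] Hmin]].
  assert (Hw0 : w 0%nat <> 0%Z) by (intro E; assert (H := simdist_x0 n zeta w Hw1 E); lra).
  set (w' := rvec zeta (w 0%nat)).
  assert (Hle : simdist n zeta w' <= simdist n zeta w) by apply rvec_le.
  assert (Hlast : forall u, nonzero n u -> (Z.abs_nat (u 0%nat) < Z.abs_nat (w' 0%nat))%nat -> d <= simdist n zeta u).
  { intros u Hu Hlt. destruct (Rle_dec d (simdist n zeta u)) as [|Hno]; auto. exfalso.
    assert (Hm := Hmin u ltac:(repeat split; auto; [lra| apply (HQ _ (Z.abs_nat (w 0%nat))); auto; simpl in Hlt; lia])).
    simpl in Hlt. lia. }
  exists w'. split; [split; [|split]|split; [|split]].
  - simpl. auto.
  - apply rvec_nearest.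
  - intros u Hu Hlt. apply abs_lt_nat in Hlt. assert (H := Hlast u Hu Hlt). lra.
  - lra.
  - simpl. auto.
  - exact Hlast.
Qed.

Lemma sim_chain_SeqH n zeta (s : nat -> zvec) : (1 <= n)%nat -> Q_lin_indep_1 n zeta ->
  (forall k, sim_best_approx n zeta (s k)) ->
  (forall k, Rabs (IZR (s k 0%nat)) <= Rabs (IZR (s (S k) 0%nat))) ->
  (forall k, simdist n zeta (s (S k)) < simdist n zeta (s k)) ->
  (forall k u, nonzero n u -> Rabs (IZR (u 0%nat)) < Rabs (IZR (s (S k) 0%nat)) -> simdist n zeta (s k) <= simdist n zeta u) ->
  SeqH n (fun v => Rabs (IZR (v 0%nat))) (simdist n zeta) s.
Proof.
  intros Hn HQ Hb Hm Hs Hbb.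
  assert (Hstr : forall k, Rabs (IZR (s k 0%nat)) + 1 <= Rabs (IZR (s (S k) 0%nat))).
  { intros k. rewrite !Rabs_Zabs. apply IZR_lt_succ. rewrite <- !Rabs_Zabs.
    destruct (Hm k) as [|E]; auto. exfalso.
    rewrite !Rabs_Zabs in E. apply eq_IZR in E.
    assert (H := nearest_same n zeta (s k) (s (S k)) (sim_best_nearest _ _ _ (Hb k)) (sim_best_nearest _ _ _ (Hb (S k))) E).
    specialize (Hs k). lra. }
  assert (Hge : forall k, INR k <= Rabs (IZR (s k 0%nat))).
  { induction k. simpl. apply Rabs_pos. rewrite S_INR. specialize (Hstr k). lra. }
  repeat split; auto.
  - intros B. destruct (nat_floor (Rmax B 0)) as [N [_ HN]]. apply Rmax_r.
    exists (S N). eapply Rlt_le_trans; [|apply Hge]. rewrite S_INR. pose proof (Rmax_l B 0). lra.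
  - intros k. apply Qindep_sim; auto. apply (Hb k).
  - intros k. apply IZR_abs_ge1. apply (Hb k).
  - intros k. exists 0%nat. split. lia. apply (Hb k).
Qed.

Lemma simseq_SeqH n zeta bu : (1 <= n)%nat -> Q_lin_indep_1 n zeta -> sim_best_approx_seq n zeta bu ->
  SeqH n (fun v => Rabs (IZR (v 0%nat))) (simdist n zeta) bu.
Proof.
  intros Hn HQ [Hb [Henum Hmon]].
  apply sim_chain_SeqH; auto; try (intro k; apply Hmon).
  intros k u Hu Hlt. destruct (Rle_dec (simdist n zeta (bu k)) (simdist n zeta u)) as [|Hno]; auto. exfalso.
  destruct (sim_min n zeta (fun m => (m < Z.abs_nat (bu (S k) 0%nat))%nat) (simdist n zeta (bu k))) as [w [Hw1 [Hw2 [Hw3 _]]]].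
  - apply nearest_half. apply sim_best_nearest. auto.
  - intros; lia.
  - exists u. repeat split; auto. lra. apply abs_lt_nat; auto.
  - destruct (Henum w Hw1) as [j Hj]. destruct (sign_sim n zeta w (bu j) Hj) as [E1 E2].
    apply abs_lt_nat in Hw3. rewrite E1 in Hw3.
    destruct (Compare_dec.le_lt_dec j k) as [Hjk|Hjk].
    + assert (Hm := mono_chain (fun k => - simdist n zeta (bu k)) ltac:(intro; simpl; specialize (proj2 (Hmon k0)); lra) j k Hjk).
      simpl in Hm. lra.
    + assert (Hm := mono_chain (fun k => Rabs (IZR (bu k 0%nat))) ltac:(intro; apply Hmon) (S k) j ltac:(lia)). simpl in Hm. lra.
Qed.


Definition SmallSim n zeta : Prop := forall eps, 0 < eps -> exists u, nonzero n u /\ simdist n zeta u < eps.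

Definition sim_rel n zeta (v w : zvec) : Prop :=
  sim_best_approx n zeta w /\ simdist n zeta w < simdist n zeta v /\
  Rabs (IZR (v 0%nat)) <= Rabs (IZR (w 0%nat)) /\
  (forall u, nonzero n u -> Rabs (IZR (u 0%nat)) < Rabs (IZR (w 0%nat)) -> simdist n zeta v <= simdist n zeta u).

Lemma sim_next_ex n zeta v : (1 <= n)%nat -> Q_lin_indep_1 n zeta -> SmallSim n zeta ->
  sim_best_approx n zeta v -> exists w, sim_rel n zeta v w.
Proof.
  intros Hn HQ HS Hv.
  assert (Hp : 0 < simdist n zeta v) by (apply Qindep_sim; auto; apply Hv).
  destruct (HS _ Hp) as [u [Hu Hul]].
  destruct (sim_min n zeta (fun _ => True) (simdist n zeta v)) as [w [Hw1 [Hw2 [_ Hw4]]]].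
  - apply nearest_half. apply sim_best_nearest; auto.
  - auto.
  - exists u; auto.
  - exists w. split; [|split; [|split]]; auto.
    + destruct (Rle_dec (Rabs (IZR (v 0%nat))) (Rabs (IZR (w 0%nat)))) as [|Hno]; auto. exfalso.
      destruct Hv as [_ [_ Hv3]]. assert (Hwn : nonzero n w) by (exists 0%nat; split; [lia|apply Hw1]).
      assert (H := Hv3 w Hwn ltac:(lra)). lra.
    + intros u' Hu' Hlt. apply Hw4; auto. apply abs_lt_nat; auto.
Qed.

Definition sim_step n zeta (v : zvec) : zvec := epsilon (inhabits v) (sim_rel n zeta v).
Definition sim_seq n zeta (k : nat) : zvec := Nat.iter k (sim_step n zeta) (rvec zeta 1%Z).

Lemma s0_best n zeta : sim_best_approx n zeta (rvec zeta 1%Z).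
Proof.
  split; [simpl; lia|split]. apply rvec_nearest.
  intros u Hu Hlt. simpl in Hlt. rewrite Rabs_R1 in Hlt.
  assert (u 0%nat = 0%Z).
  { destruct (Z.eq_dec (u 0%nat) 0) as [|Hne]; auto. pose proof (IZR_abs_ge1 _ Hne). lra. }
  assert (H1 := simdist_x0 n zeta u Hu H). assert (H2 := nearest_half n zeta _ (rvec_nearest n zeta 1%Z)). lra.
Qed.

Lemma sim_seq_props n zeta : (1 <= n)%nat -> Q_lin_indep_1 n zeta -> SmallSim n zeta ->
  forall k, sim_best_approx n zeta (sim_seq n zeta k) /\ sim_rel n zeta (sim_seq n zeta k) (sim_seq n zeta (S k)).
Proof.
  intros Hn HQ HS k. induction k.
  - split. apply s0_best. simpl. unfold sim_step. apply epsilon_spec. apply sim_next_ex; auto. apply s0_best.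
  - destruct IHk as [_ Hr]. assert (Hb : sim_best_approx n zeta (sim_seq n zeta (S k))) by apply Hr.
    split; auto. change (sim_seq n zeta (S (S k))) with (sim_step n zeta (sim_seq n zeta (S k))).
    unfold sim_step. apply epsilon_spec. apply sim_next_ex; auto.
Qed.

Lemma sim_seq_SeqH n zeta : (1 <= n)%nat -> Q_lin_indep_1 n zeta -> SmallSim n zeta ->
  SeqH n (fun v => Rabs (IZR (v 0%nat))) (simdist n zeta) (sim_seq n zeta).
Proof.
  intros Hn HQ HS. assert (H := sim_seq_props n zeta Hn HQ HS).
  apply sim_chain_SeqH; auto.
  - intros k; apply (H k).
  - intros k; apply (H k).
  - intros k; apply (H k).
  - intros k u Hu Hlt. apply (H k); auto.
Qed.

Lemma sim_hat0 n zeta : ghat n (fun v => Rabs (IZR (v 0%nat))) (simdist n zeta) 1 0.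
Proof.
  apply (hat0_of n _ _ (rvec zeta 1%Z)).
  exists 0%nat. split. lia. simpl. lia.
  simpl. rewrite Rabs_R1. lra.
  assert (H := nearest_half n zeta _ (rvec_nearest n zeta 1%Z)). lra.
Qed.

Lemma smallsim_of_lub n zeta lh : is_lub (ghat n (fun v => Rabs (IZR (v 0%nat))) (simdist n zeta) 1) lh ->
  0 < lh -> SmallSim n zeta.
Proof.
  intros Hl Hp eps He.
  assert (Hh : ghat n (fun v => Rabs (IZR (v 0%nat))) (simdist n zeta) 1 (lh / 2)) by (apply (ghat_lub_in _ _ _ _ lh); auto; lra).
  destruct Hh as [X0 [HX0 Hh]].
  set (X := Rmax X0 (exp (1 + Rabs (ln eps) / (lh / 2)))).
  destruct (Hh X (Rmax_l _ _)) as [V [HV HVb]]. destruct (HVb 0%nat ltac:(lia)) as [_ Hd].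
  exists (V 0%nat). split. apply lin_indep_1_nonzero; auto.
  eapply Rle_lt_trans; eauto. unfold Rpower.
  assert (HlnX : 1 + Rabs (ln eps) / (lh / 2) <= ln X).
  { rewrite <- (ln_exp (1 + Rabs (ln eps) / (lh / 2))) at 1. apply ln_le. apply exp_pos. apply Rmax_r. }
  rewrite <- (exp_ln eps) by auto. apply exp_increasing.
  assert (H1 : lh / 2 * (1 + Rabs (ln eps) / (lh / 2)) <= lh / 2 * ln X) by (apply Rmult_le_compat_l; lra).
  replace (lh / 2 * (1 + Rabs (ln eps) / (lh / 2))) with (lh / 2 + Rabs (ln eps)) in H1 by (field; lra).
  pose proof (Rle_abs (- ln eps)). rewrite Rabs_Ropp in H. lra.
Qed.

Lemma sim_small n zeta s : SmallSim n zeta -> SeqH n (fun v => Rabs (IZR (v 0%nat))) (simdist n zeta) s ->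
  forall eps, 0 < eps -> forall K, exists k, (K <= k)%nat /\ simdist n zeta (s k) < eps.
Proof.
  intros HS Hs eps He K. destruct (HS eps He) as [u [Hu Hul]].
  destruct (seq_unb _ _ _ s Hs (Rabs (IZR (u 0%nat))) K) as [k [Hk HH]].
  exists k. split; auto. destruct Hs as (_ & _ & Hb & _).
  assert (H := Hb k u Hu (HH (S k) ltac:(lia))). lra.
Qed.

Lemma rsum_2pts (f : nat -> R) m a b A B : (a < m)%nat -> (b < m)%nat -> a <> b ->
  rsum (fun t => (if Nat.eqb t a then A else if Nat.eqb t b then B else 0) * f t) m = A * f a + B * f b.
Proof.
  intros Ha Hb Hab.
  rewrite (rsum_ext _ (fun t => (if Nat.eqb t a then A * f t else 0) + (if Nat.eqb t b then B * f t else 0))).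
  rewrite rsum_plus. rewrite (rsum_single _ m a), (rsum_single _ m b); auto.
  - rewrite Nat.eqb_refl, Nat.eqb_refl. auto.
  - intros i Hi Hne. destruct (Nat.eqb_spec i b); [lia|auto].
  - intros i Hi Hne. destruct (Nat.eqb_spec i a); [lia|auto].
  - intros i Hi. destruct (Nat.eqb_spec i a); destruct (Nat.eqb_spec i b); subst; try lia; ring.
Qed.

Lemma sim_triple n zeta s : (2 <= n)%nat -> Q_lin_indep_1 n zeta -> SmallSim n zeta ->
  SeqH n (fun v => Rabs (IZR (v 0%nat))) (simdist n zeta) s ->
  forall K, exists k, (K <= k)%nat /\ lin_indep n 3 (shift s k).
Proof.
  intros Hn HQ HS Hs K. apply NNPP. intros Hno.
  assert (H3 : forall k, (K <= k)%nat -> ~ lin_indep n 3 (shift s k)) by (intros k Hk Hl; apply Hno; eauto).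
  assert (H2 := indep2_consec n _ _ s Hs (scal_x n) (scal_sim n zeta)).
  assert (Hsp := span_all n s K H2 H3).
  set (p := s K) in *. set (q := s (S K)) in *.
  assert (Hs' := Hs). destruct Hs' as (_ & _ & _ & _ & _ & Hge1 & _).
  assert (Hp0 : p 0%nat <> 0%Z).
  { intro E. assert (H := Hge1 K). fold p in H. rewrite E in H. simpl in H. rewrite Rabs_R0 in H. lra. }
  set (m := fun i => (p 0%nat * q i - q 0%nat * p i)%Z).
  assert (Hm0 : forall j, (j < n)%nat -> m (S j) = 0%Z).
  { intros j Hj. set (i := if Nat.eqb j 0 then 1%nat else 0%nat).
    assert (Hi : (i < n)%nat) by (unfold i; destruct (Nat.eqb_spec j 0); lia).
    assert (Hij : i <> j) by (unfold i; destruct (Nat.eqb_spec j 0); lia).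
    set (E := IZR (m (S j)) * (IZR (p 0%nat) * zeta i - IZR (p (S i))) - IZR (m (S i)) * (IZR (p 0%nat) * zeta j - IZR (p (S j)))).
    assert (HE : E = 0).
    { destruct (Req_dec E 0) as [|HnE]; auto. exfalso.
      set (C := Rabs (IZR (p 0%nat)) * (Rabs (IZR (m (S j))) + Rabs (IZR (m (S i)))) + 1).
      assert (HC : 0 < C) by (unfold C; pose proof (Rabs_pos (IZR (p 0%nat))); pose proof (Rabs_pos (IZR (m (S j)))); pose proof (Rabs_pos (IZR (m (S i)))); nra).
      assert (HEp : 0 < Rabs E) by (apply Rabs_pos_lt; auto).
      destruct (sim_small n zeta s HS Hs (Rabs E / C) ltac:(apply Rdiv_lt_0_compat; auto) K) as [k [Hk Hsk]].
      destruct (Hsp k Hk) as [a [b Eab]].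
      set (v := s k) in *.
      assert (Id : IZR (m (S j)) * (IZR (p 0%nat) * rv v (S i) - IZR (p (S i)) * rv v 0) =
                   IZR (m (S i)) * (IZR (p 0%nat) * rv v (S j) - IZR (p (S j)) * rv v 0)).
      { unfold m. rewrite !minus_IZR, !mult_IZR. fold (rv p 0) (rv q 0) (rv p (S i)) (rv q (S i)) (rv p (S j)) (rv q (S j)).
        rewrite (Eab 0%nat), (Eab (S i)), (Eab (S j)) by lia. ring. }
      set (ei := zeta i * rv v 0 - rv v (S i)). set (ej := zeta j * rv v 0 - rv v (S j)).
      assert (Hei : Rabs ei <= simdist n zeta v) by (apply simdist_ge; auto).
      assert (Hej : Rabs ej <= simdist n zeta v) by (apply simdist_ge; auto).
      assert (HEv : E * rv v 0 = IZR (p 0%nat) * (IZR (m (S j)) * ei - IZR (m (S i)) * ej)).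
      { unfold E, ei, ej. unfold rv in Id |- *. nra. }
      assert (Hv1 : 1 <= Rabs (rv v 0)) by apply (Hge1 k).
      assert (Hb1 : Rabs E <= Rabs (E * rv v 0)).
      { rewrite Rabs_mult. rewrite <- (Rmult_1_r (Rabs E)) at 1. apply Rmult_le_compat_l; auto using Rabs_pos. }
      rewrite HEv in Hb1. rewrite Rabs_mult in Hb1.
      assert (Hb2 : Rabs (IZR (m (S j)) * ei - IZR (m (S i)) * ej) <= (Rabs (IZR (m (S j))) + Rabs (IZR (m (S i)))) * simdist n zeta v).
      { eapply Rle_trans. apply Rabs_sub_le. rewrite !Rabs_mult.
        assert (Rabs (IZR (m (S j))) * Rabs ei <= Rabs (IZR (m (S j))) * simdist n zeta v) by (apply Rmult_le_compat_l; auto using Rabs_pos).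
        assert (Rabs (IZR (m (S i))) * Rabs ej <= Rabs (IZR (m (S i))) * simdist n zeta v) by (apply Rmult_le_compat_l; auto using Rabs_pos).
        lra. }
      assert (Hb3 : Rabs E <= (C - 1) * simdist n zeta v).
      { unfold C. replace (Rabs (IZR (p 0%nat)) * (Rabs (IZR (m (S j))) + Rabs (IZR (m (S i)))) + 1 - 1)
          with (Rabs (IZR (p 0%nat)) * (Rabs (IZR (m (S j))) + Rabs (IZR (m (S i))))) by ring.
        eapply Rle_trans; eauto. rewrite Rmult_assoc. apply Rmult_le_compat_l; auto using Rabs_pos. }
      assert (Hsd : 0 <= simdist n zeta v) by apply simdist_ge0.
      apply (Rmult_lt_compat_l C) in Hsk; auto. replace (C * (Rabs E / C)) with (Rabs E) in Hsk by (field; lra).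
      nra. }
    destruct (HQ (inject_Z (- m (S j) * p (S i) + m (S i) * p (S j)))
                 (fun t => if Nat.eqb t i then inject_Z (m (S j) * p 0%nat) else
                           if Nat.eqb t j then inject_Z (- m (S i) * p 0%nat) else 0%Q)) as [_ HQ2].
    { rewrite (rsum_ext _ (fun t => (if Nat.eqb t i then IZR (m (S j) * p 0%nat) else
                           if Nat.eqb t j then IZR (- m (S i) * p 0%nat) else 0) * zeta t)).
      2:{ intros t Ht. destruct (Nat.eqb t i); [rewrite Q2R_inj; auto|]. destruct (Nat.eqb t j); [rewrite Q2R_inj; auto|]. unfold Q2R; simpl; ring. }
      rewrite rsum_2pts; auto. rewrite Q2R_inj. unfold E in HE. rewrite !plus_IZR, !mult_IZR, !opp_IZR.
      repeat rewrite ?mult_IZR, ?opp_IZR. lra. }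
    specialize (HQ2 i Hi). rewrite Nat.eqb_refl, Q2R_inj, mult_IZR in HQ2.
    apply Rmult_integral in HQ2. destruct HQ2 as [H|H]; apply eq_IZR in H; auto. contradiction. }
  assert (Hc := H2 K (fun t => if Nat.eqb t 0 then IZR (q 0%nat) else - IZR (p 0%nat))).
  assert (E1 : (fun t : nat => if Nat.eqb t 0 then IZR (q 0%nat) else - IZR (p 0%nat)) 1%nat = 0).
  { apply Hc; [|lia]. intros i Hi. rewrite rsum_2. unfold shift. rewrite Nat.add_0_r, Nat.add_1_r. simpl. fold p q.
    destruct i as [|i]. ring. assert (Hm := Hm0 i ltac:(lia)). unfold m in Hm.
    apply (f_equal IZR) in Hm. rewrite minus_IZR, !mult_IZR in Hm. lra. }
  simpl in E1. apply Hp0. apply eq_IZR. lra.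
Qed.


Lemma Rabs_le_inv a b : Rabs a <= b -> - b <= a <= b.
Proof. intros H. pose proof (Rle_abs a). pose proof (Rle_abs (- a)). rewrite Rabs_Ropp in H1. lra. Qed.

Definition sgn (r : R) : Z := if Rle_dec 0 r then 1%Z else (-1)%Z.

Lemma sgn_spec r : Rabs r <= / 2 -> Rabs (r - IZR (sgn r)) <= 1 /\ sgn r <> 0%Z.
Proof.
  intros H. unfold sgn. destruct (Rle_dec 0 r); split; try lia; apply Rabs_le; apply Rabs_le_inv in H; simpl; lra.
Qed.

Definition uvec zeta (a : nat) : zvec :=
  fun t => if Nat.eqb t (S a) then (rnd (zeta a * IZR 1) + sgn (zeta a * IZR 1 - IZR (rnd (zeta a * IZR 1))))%Z
           else rvec zeta 1%Z t.

Lemma uvec_simdist n zeta a : simdist n zeta (uvec zeta a) <= 1.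
Proof.
  apply simdist_le. lra. intros i Hi. unfold uvec. simpl.
  destruct (Nat.eqb_spec i a).
  - subst. rewrite plus_IZR.
    set (r := zeta a * 1). destruct (sgn_spec (r - IZR (rnd r)) (rnd_half r)) as [H _].
    replace (r - (IZR (rnd r) + IZR (sgn (r - IZR (rnd r))))) with (r - IZR (rnd r) - IZR (sgn (r - IZR (rnd r)))) by ring.
    exact H.
  - destruct (Nat.eqb_spec (S i) (S a)). lia. simpl. pose proof (rnd_half (zeta i * 1)). lra.
Qed.

Lemma lambda3_zero n zeta : (2 <= n)%nat -> gset n (fun v => Rabs (IZR (v 0%nat))) (simdist n zeta) 3 0.
Proof.
  intros Hn X0. exists (Rmax X0 1). split. apply Rmax_l. split. apply Rmax_r.
  set (V := fun m => match m with O => rvec zeta 1%Z | 1%nat => uvec zeta 0 | _ => uvec zeta 1 end).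
  exists V. split.
  - intros c Hc k Hk.
    assert (C0 := Hc 0%nat ltac:(lia)). assert (C1 := Hc 1%nat ltac:(lia)). assert (C2 := Hc 2%nat ltac:(lia)).
    rewrite rsum_3 in C0, C1, C2. simpl in C0, C1, C2. unfold uvec in C1, C2. simpl in C1, C2.
    rewrite !plus_IZR in C1, C2.
    destruct (sgn_spec _ (rnd_half (zeta 0%nat * 1))) as [_ S0].
    destruct (sgn_spec _ (rnd_half (zeta 1%nat * 1))) as [_ S1].
    set (s0 := IZR (sgn (zeta 0%nat * 1 - IZR (rnd (zeta 0%nat * 1))))) in *.
    set (s1 := IZR (sgn (zeta 1%nat * 1 - IZR (rnd (zeta 1%nat * 1))))) in *.
    assert (Hs0 : s0 <> 0) by (unfold s0; intro E; apply S0; apply eq_IZR; auto).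
    assert (Hs1 : s1 <> 0) by (unfold s1; intro E; apply S1; apply eq_IZR; auto).
    unfold uvec in C0. simpl in C0.
    assert (Hsum : c 0%nat + c 1%nat + c 2%nat = 0) by lra.
    assert (Hc1 : c 1%nat * s0 = 0) by nra.
    assert (Hc2 : c 2%nat * s1 = 0) by nra.
    apply Rmult_integral in Hc1. apply Rmult_integral in Hc2.
    destruct Hc1 as [Hc1|]; [|contradiction]. destruct Hc2 as [Hc2|]; [|contradiction].
    destruct k as [|[|[|k]]]; try lia; lra.
  - intros k Hk. split.
    + destruct k as [|[|[|k]]]; simpl; unfold uvec; simpl; rewrite Rabs_R1; apply Rmax_r.
    + replace (- 0) with 0 by ring. rewrite Rpower_O by (pose proof (Rmax_r X0 1); lra).
      destruct k as [|[|[|k]]]; try lia; simpl; try apply uvec_simdist.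
      pose proof (nearest_half n zeta _ (rvec_nearest n zeta 1%Z)). lra.
Qed.

Lemma final_lin n w wh : (2 <= n)%nat -> 0 <= wh -> wh <= w ->
  wh ^ n <= wh ^ (n - 1) + INR (n - 1) * w ^ (n - 1) ->
  wh * Rpower ((wh - 1) / INR (n - 1)) (/ INR (n - 1)) <= w.
Proof.
  intros Hn H0 Hw H.
  assert (Hn1 : 1 <= INR (n - 1)) by (apply (le_INR 1); lia).
  destruct (Rle_dec wh 1) as [H1|H1].
  - assert (Rpower ((wh - 1) / INR (n - 1)) (/ INR (n - 1)) <= 1).
    { destruct (Rlt_dec 0 ((wh - 1) / INR (n - 1))) as [Hp|Hp].
      - exfalso. assert (0 < wh - 1). { apply (Rmult_lt_reg_r (/ INR (n - 1))). apply Rinv_0_lt_compat; lra. lra. } lra.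
      - unfold Rpower, ln. destruct (Rlt_dec 0 _); [contradiction|]. rewrite Rmult_0_r, exp_0. lra. }
    assert (0 <= Rpower ((wh - 1) / INR (n - 1)) (/ INR (n - 1))) by (unfold Rpower; left; apply exp_pos).
    nra.
  - assert (Hwp : 0 < wh) by lra.
    assert (Hb : 0 < (wh - 1) / INR (n - 1)) by (apply Rdiv_lt_0_compat; lra).
    assert (Hpn : wh ^ n = wh * wh ^ (n - 1)) by (destruct n; [lia|simpl; rewrite Nat.sub_0_r; reflexivity]).
    assert (Hq : 0 < wh ^ (n - 1)) by (apply pow_lt; lra).
    assert (Hle : (wh - 1) / INR (n - 1) <= (w / wh) ^ (n - 1)).
    { rewrite pow_div. apply (Rmult_le_reg_r (INR (n - 1) * wh ^ (n - 1))). nra.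
      field_simplify; try lra; nra. }
    assert (Hr : Rpower ((wh - 1) / INR (n - 1)) (/ INR (n - 1)) <= w / wh).
    { rewrite <- (Rpower_pow (n - 1) (w / wh)) in Hle by (apply Rdiv_lt_0_compat; lra).
      assert (Hle2 := Rle_Rpower_l _ _ (/ INR (n - 1)) ltac:(left; apply Rinv_0_lt_compat; lra) (conj Hb Hle)).
      rewrite Rpower_mult in Hle2. rewrite Rinv_r in Hle2 by lra. rewrite Rpower_1 in Hle2 by (apply Rdiv_lt_0_compat; lra).
      exact Hle2. }
    apply (Rmult_le_compat_l wh) in Hr; [|lra]. replace (wh * (w / wh)) with w in Hr by (field; lra). exact Hr.
Qed.

Lemma final_sim n l lh : (2 <= n)%nat -> 0 <= lh -> lh <= l ->
  lh * l ^ (n - 1) + INR (n - 1) * lh ^ n <= l ^ (n - 1) ->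
  l >= lh * Rpower (INR (n - 1) * lh / (1 - lh)) (/ INR (n - 1)).
Proof.
  intros Hn H0 Hl H. apply Rle_ge.
  assert (Hn1 : 1 <= INR (n - 1)) by (apply (le_INR 1); lia).
  destruct H0 as [Hp|Hz].
  2:{ rewrite <- Hz. rewrite Rmult_0_l. lra. }
  assert (Hlp : 0 < l) by lra.
  assert (Hq : 0 < l ^ (n - 1)) by (apply pow_lt; lra).
  assert (Hpn : lh ^ n = lh * lh ^ (n - 1)) by (destruct n; [lia|simpl; rewrite Nat.sub_0_r; reflexivity]).
  assert (Hq' : 0 < lh ^ (n - 1)) by (apply pow_lt; lra).
  assert (Hlt1 : lh < 1).
  { destruct (Rlt_dec lh 1); auto. exfalso.
    assert (INR (n - 1) * lh ^ n > 0) by (rewrite Hpn; apply Rmult_lt_0_compat; [lra|apply Rmult_lt_0_compat; lra]).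
    assert (lh * l ^ (n - 1) >= l ^ (n - 1)) by nra. lra. }
  assert (Hb : 0 < INR (n - 1) * lh / (1 - lh)) by (apply Rdiv_lt_0_compat; nra).
  assert (Hle : INR (n - 1) * lh / (1 - lh) <= (l / lh) ^ (n - 1)).
  { rewrite pow_div. apply (Rmult_le_reg_r ((1 - lh) * lh ^ (n - 1))). nra.
    field_simplify; try lra; rewrite Hpn in H; nra. }
  assert (Hr : Rpower (INR (n - 1) * lh / (1 - lh)) (/ INR (n - 1)) <= l / lh).
  { rewrite <- (Rpower_pow (n - 1) (l / lh)) in Hle by (apply Rdiv_lt_0_compat; lra).
    assert (Hle2 := Rle_Rpower_l _ _ (/ INR (n - 1)) ltac:(left; apply Rinv_0_lt_compat; lra) (conj Hb Hle)).
    rewrite Rpower_mult in Hle2. rewrite Rinv_r in Hle2 by lra. rewrite Rpower_1 in Hle2 by (apply Rdiv_lt_0_compat; lra).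
    exact Hle2. }
  apply (Rmult_le_compat_l lh) in Hr; [|lra]. replace (lh * (l / lh)) with l in Hr by (field; lra). exact Hr.
Qed.

Lemma ipart n ht er s w wh : SeqH n ht er s ->
  is_lub (gset n ht er 1) w -> is_lub (ghat n ht er 1) wh -> ghat n ht er 1 0 ->
  (forall K, exists k, (K <= k)%nat /\ lin_indep n (S n) (fun m => s (k + m)%nat)) ->
  forall (i : nat) (wi : R), (1 <= i <= S n)%nat -> is_lub (gset n ht er i) wi ->
    powerRZ wh (Z.of_nat i - 1) / powerRZ w (Z.of_nat i - 2) <= wi.
Proof.
  intros Hs Hw Hwh H0 Hinf i wi Hi Hwi.
  destruct (Nat.eq_dec i 1) as [E|E].
  - subst i. assert (wi = w) by (eapply is_lub_u; eauto). subst wi.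
    simpl. rewrite Rmult_1_r. unfold Rdiv. rewrite Rmult_1_l, Rinv_inv. lra.
  - replace (Z.of_nat i - 1)%Z with (Z.of_nat (i - 1)) by lia.
    replace (Z.of_nat i - 2)%Z with (Z.of_nat (i - 2)) by lia.
    rewrite <- !pow_powerRZ.
    apply (lub_ge _ _ _ Hwi).
    apply (G1 n ht er s w wh i Hs ltac:(lia) Hw Hwh H0).
    intros K. destruct (Hinf K) as [k [Hk Hl]]. exists k. split; auto.
    eapply lin_indep_le; [|eauto]. lia.
Qed.


From mathcomp Require Import all_boot all_order all_algebra.
From mathcomp Require Import Rstruct perm fingroup.
Import Order.TTheory GRing.Theory Num.Theory.
Open Scope ring_scope.

Lemma detbound (m : nat) (A : 'M[R]_(m.+2)) (e g : 'I_(m.+2) -> R) (E1 G : R) :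
  (forall j, 0 <= e j) -> (forall j, 0 <= g j) ->
  (forall j, `|A j ord0| <= e j) -> (forall j i, i != ord0 -> `|A j i| <= g j) ->
  (forall j0, exists2 i1, i1 != j0 & e j0 * g i1 <= E1) ->
  (forall i, g i <= G) ->
  `|\det A| <= (m.+2)`!%:R * (E1 * G ^+ m).
Proof.
  move=> e0 g0 He Hg Hj Hgc.
  have G0 : 0 <= G by apply: le_trans (g0 ord0) (Hgc ord0).
  have Hs : forall s : 'S_(m.+2), `|(-1) ^+ s * \prod_i A i (s i)| <= E1 * G ^+ m.
  { move=> s. rewrite normrM normr_sign mul1r normr_prod.
    set j0 := (s^-1)%g ord0.
    have sj0 : s j0 = ord0 by rewrite /j0 permKV.
    rewrite (bigD1 j0) //= sj0.
    case: (Hj j0) => i1 Hi1 He1.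
    rewrite (bigD1 i1) //=.
    have si1 : s i1 != ord0 by rewrite -sj0 (inj_eq perm_inj).
    have B1 : `|A i1 (s i1)| <= g i1 := Hg _ _ si1.
    have B2 : \prod_(i | (i != j0) && (i != i1)) `|A i (s i)| <= G ^+ m.
    { apply: le_trans (_ : \prod_(i | (i != j0) && (i != i1)) G <= _).
      - apply: ler_prod => i /andP [Hi0 Hi1']. rewrite normr_ge0 /=. apply: le_trans (Hgc i). apply: Hg.
        by rewrite -sj0 (inj_eq perm_inj).
      - rewrite prodr_const.
        have -> : #|[pred i | (i != j0) && (i != i1)]| = m.
        { have Hc := cardC1 j0. rewrite card_ord /= (cardD1 i1) inE Hi1 add1n in Hc.
          have Hc' : #|[predD1 (predC1 j0) & i1]| = m by case: Hc.
          rewrite -[in RHS]Hc'. apply: eq_card => i. by rewrite !inE andbC. }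
        by []. }
    have P0 : 0 <= \prod_(i | (i != j0) && (i != i1)) `|A i (s i)| by apply: prodr_ge0 => i _; apply: normr_ge0.
    apply: le_trans (_ : e j0 * (g i1 * G ^+ m) <= _).
    - apply: ler_pM => //. apply: mulr_ge0 => //. apply: ler_pM => //.
    - rewrite mulrA. apply: ler_wpM2r => //. by apply: exprn_ge0. }
  rewrite /determinant. apply: le_trans (ler_norm_sum _ _ _) _.
  apply: le_trans (_ : \sum_(s : 'S_(m.+2)) (E1 * G ^+ m) <= _).
  - by apply: ler_sum => s _; apply: Hs.
  - by rewrite sumr_const card_Sn mulr_natl.
Qed.

Lemma sumR (F : nat -> R) m : \sum_(i < m) F i = rsum F m.
Proof.
  elim: m => [|m IH]; first by rewrite big_ord0.
  by rewrite big_ord_recr /= IH.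
Qed.

Lemma negint : forall x : R, x \is a Num.int -> - x \is a Num.int.
Proof. move=> x H. rewrite rpredN. exact H. Qed.

Lemma IZR_int z : IZR z \is a Num.int.
Proof.
  case: z => [|p|p].
  - by rewrite R0E.
  - by rewrite IZRposE INRE natr_int.
  - rewrite -Pos2Z.opp_pos opp_IZR. apply: negint. by rewrite IZRposE INRE natr_int.
Qed.

Lemma det_int k (M : 'M[R]_k) : (forall i j, M i j \is a Num.int) -> \det M \is a Num.int.
Proof.
  move=> H. rewrite /determinant. apply: rpred_sum => s _. apply: rpredM.
  - apply: rpredX. rewrite rpredN. exact: rpred1.
  - apply: rpred_prod => i _. exact: H.
Qed.

Lemma detM_ge1 n (V : nat -> zvec) : lin_indep n (S n) V ->
  1 <= `|\det (\matrix_(j < n.+1, i < n.+1) IZR (V j i))|.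
Proof.
  move=> HV. apply: norm_intr_ge1.
  - apply: det_int => i j. rewrite mxE. exact: IZR_int.
  - apply/negP => /det0P [v Hv0 Hv]. move/negP: Hv0; apply. apply/eqP/rowP => j.
    have Hc := HV (fun k => v ord0 (inord k)).
    have Hz : forall k, (k < S n)%coq_nat -> v ord0 (inord k) = 0.
    { apply: Hc => i Hi. rewrite -sumR.
      move/matrixP: (Hv) => /(_ ord0 (inord i)). rewrite !mxE => H0.
      apply: (etrans _ H0). apply: eq_bigr => k _. rewrite mxE inordK. by rewrite inord_val.
      apply/ssrnat.ltP. lia. }
    rewrite mxE -(inord_val j). apply: Hz. apply/ssrnat.ltP. by rewrite ltn_ord.
Qed.

Delimit Scope R_scope with Re.

Lemma det_lin_bound m zeta (V : nat -> zvec) :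
  lin_indep (S m) (S (S m)) V ->
  (forall j j', (j <= j')%coq_nat -> (height (S m) (V j) <= height (S m) (V j'))%Re) ->
  (forall j j', (j <= j')%coq_nat -> (Rabs (linform (S m) zeta (V j')) <= Rabs (linform (S m) zeta (V j)))%Re) ->
  (1 <= INR (Factorial.fact (S (S m))) * Rabs (linform (S m) zeta (V 0%N)) * height (S m) (V 1%N) * height (S m) (V (S m)) ^ m)%Re.
Proof.
  move=> HV Hh HL.
  pose M := \matrix_(j < m.+2, i < m.+2) IZR (V j i).
  pose P := \matrix_(l < m.+2, i < m.+2) (if i == ord0 then (if l == ord0 then 1 else zeta (l.-1)) else (l == i)%:R).
  have HA0 : forall j : 'I_(m.+2), (M *m P) j ord0 = linform (S m) zeta (V j).
  { move=> j. rewrite !mxE big_ord_recl !mxE eqxx /= mulr1. rewrite /linform -sumR.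
    congr (_ + _). apply: eq_bigr => l _. rewrite !mxE /=. by rewrite mulrC. }
  have HAi : forall (j i : 'I_(m.+2)), i != ord0 -> (M *m P) j i = IZR (V j i).
  { move=> j i Hi. rewrite !mxE (bigD1 i) //= !mxE (negbTE Hi) eqxx mulr1 big1 ?addr0 // => l Hl.
    by rewrite !mxE (negbTE Hi) (negbTE Hl) mulr0. }
  have HdetP : \det P = 1.
  { rewrite det_trig.
    - apply: big1 => i _. rewrite mxE eqxx. by case: (i == ord0).
    - apply/forallP => l; apply/forallP => i; apply/implyP => Hli. rewrite mxE.
      have Hi0 : i != ord0 by apply/eqP => Hi; rewrite Hi in Hli.
      have Hli' : l != i by rewrite neq_ltn Hli.
      by rewrite (negbTE Hi0) (negbTE Hli'). }
  have Hdet : 1 <= `|\det (M *m P)| by rewrite det_mulmx HdetP mulr1; apply: detM_ge1.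
  have Hb := detbound m (M *m P) (fun j => Rabs (linform (S m) zeta (V j))) (fun j => height (S m) (V j))
     (Rabs (linform (S m) zeta (V 0%N)) * height (S m) (V 1%N)) (height (S m) (V (S m))).
  have Hle := le_trans Hdet (Hb _ _ _ _ _ _).
  apply/RleP. rewrite !RmultE INRE factE RpowE -!mulrA R1E. move: Hle. rewrite !RmultE -!mulrA. apply.
  - move=> j. apply/RleP. apply: Rabs_pos.
  - move=> j. apply/RleP. apply: height_ge0.
  - move=> j. by rewrite HA0 -RabsE.
  - move=> j i Hi. rewrite HAi // -RabsE. apply/RleP. apply: height_ge. apply/ssrnat.leP. by rewrite -ltnS.
  - move=> j0. case: (eqVneq j0 ord0) => [->|Hj0].
    + have H1 : (inord 1 : 'I_(m.+2)) != ord0 by apply/eqP => /(congr1 val); rewrite /= inordK.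
      exists (inord 1) => //=. rewrite inordK //.
    + exists ord0; first by rewrite eq_sym.
      apply: ler_pM.
      * apply/RleP. apply: Rabs_pos.
      * apply/RleP. apply: height_ge0.
      * apply/RleP. apply: HL. by apply/ssrnat.leP.
      * apply/RleP. apply: Hh. by apply/ssrnat.leP.
  - move=> i. apply/RleP. apply: Hh. apply/ssrnat.leP. by rewrite -ltnS.
Qed.

Lemma det_sim_bound m zeta (V : nat -> zvec) :
  lin_indep (S m) (S (S m)) V ->
  (forall j j', (j <= j')%coq_nat -> (Rabs (IZR (V j 0%N)) <= Rabs (IZR (V j' 0%N)))%Re) ->
  (forall j j', (j <= j')%coq_nat -> (simdist (S m) zeta (V j') <= simdist (S m) zeta (V j))%Re) ->
  (1 <= INR (Factorial.fact (S (S m))) * Rabs (IZR (V (S m) 0%N)) * simdist (S m) zeta (V m) * simdist (S m) zeta (V 0%N) ^ m)%Re.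
Proof.
  move=> HV Hh HL.
  pose M := \matrix_(j < m.+2, i < m.+2) IZR (V j i).
  pose P := \matrix_(l < m.+2, i < m.+2) (if l == ord0 then (if i == ord0 then 1 else zeta (i.-1)) else - (l == i)%:R).
  have HA : forall (j i : 'I_(m.+2)), (M *m P) j i =
       (if i == ord0 then IZR (V j 0%N) else IZR (V j 0%N) * zeta (i.-1) - IZR (V j i)).
  { move=> j i. rewrite !mxE (bigD1 ord0) //= !mxE eqxx.
    case: (eqVneq i ord0) => [->|Hi].
    - rewrite mulr1 big1 ?addr0 // => l Hl. by rewrite !mxE (negbTE Hl) /= oppr0 mulr0.
    - rewrite (bigD1 i) /=; last by rewrite Hi.
      rewrite !mxE (negbTE Hi) eqxx big1 ?addr0; first by rewrite mulrN mulr1.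
      move=> l /andP [Hl Hli]. by rewrite !mxE (negbTE Hl) (negbTE Hli) /= oppr0 mulr0. }
  have HdetP : `|\det P| = 1.
  { rewrite -det_tr det_trig.
    - rewrite normr_prod. apply: big1 => i _. rewrite !mxE.
      rewrite eqxx. case: (i == ord0); by rewrite ?normrN normr1.
    - apply/forallP => l; apply/forallP => i; apply/implyP => Hli. rewrite !mxE.
      have Hi0 : i != ord0 by apply/eqP => Hi; rewrite Hi in Hli.
      have Hli' : i != l by rewrite eq_sym neq_ltn Hli.
      by rewrite (negbTE Hi0) (negbTE Hli') oppr0. }
  have Hdet : 1 <= `|\det (M *m P)| by rewrite det_mulmx normrM HdetP mulr1; apply: detM_ge1.
  have Hb := detbound m (M *m P) (fun j => Rabs (IZR (V j 0%N))) (fun j => simdist (S m) zeta (V j))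
     (Rabs (IZR (V (S m) 0%N)) * simdist (S m) zeta (V m)) (simdist (S m) zeta (V 0%N)).
  have Hle := le_trans Hdet (Hb _ _ _ _ _ _).
  apply/RleP. rewrite !RmultE INRE factE RpowE -!mulrA R1E. move: Hle. rewrite !RmultE -!mulrA. apply.
  - move=> j. apply/RleP. apply: Rabs_pos.
  - move=> j. apply/RleP. apply: simdist_ge0.
  - move=> j. by rewrite HA eqxx -RabsE.
  - move=> j i Hi. rewrite HA (negbTE Hi) -RabsE. apply/RleP.
    have Hipos : (0 < i)%N.
    { rewrite lt0n. apply/eqP => H0. move/eqP: Hi; apply. apply: val_inj. exact H0. }
    have Hi1 : (i.-1 < S m)%coq_nat.
    { apply/ssrnat.ltP. by rewrite -ltnS prednK. }
    have := simdist_ge (S m) zeta (V j) (i.-1) Hi1.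
    have -> : S (i.-1) = i by rewrite prednK.
    by rewrite mulrC.
  - move=> j0. case: (eqVneq j0 ord_max) => [->|Hj0].
    + have H1 : (inord m : 'I_(m.+2)) != ord_max.
      { apply/eqP => /(congr1 val). rewrite /= inordK //. move=> H. lia. }
      exists (inord m) => //=. rewrite inordK //.
    + exists ord_max; first by rewrite eq_sym.
      apply: ler_pM.
      * apply/RleP. apply: Rabs_pos.
      * apply/RleP. apply: simdist_ge0.
      * apply/RleP. apply: Hh. apply/ssrnat.leP. by rewrite -ltnS.
      * apply/RleP. apply: HL. by apply/ssrnat.leP.
  - move=> i. apply/RleP. apply: HL. by apply/ssrnat.leP.
Qed.


Notation "x <= y" := (le x y) (at level 70, no associativity) : nat_scope.
Notation "x < y" := (lt x y) (at level 70, no associativity) : nat_scope.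
Notation "x <= y <= z" := (le x y /\ le y z) (at level 70, y at next level) : nat_scope.
Notation "x + y" := (Nat.add x y) (at level 50, left associativity) : nat_scope.
Notation "x - y" := (Nat.sub x y) (at level 50, left associativity) : nat_scope.
Notation "x * y" := (Nat.mul x y) (at level 40, left associativity) : nat_scope.
Open Scope R_scope.

Lemma DetLin_inf n zeta s : (1 <= n)%nat ->
  SeqH n (height n) (fun v => Rabs (linform n zeta v)) s ->
  (forall K, exists k, (K <= k)%nat /\ lin_indep n (S n) (fun m => s (k + m)%nat)) ->
  forall K, exists k, (K <= k)%nat /\
    1 <= INR (Factorial.fact (S n)) * Rabs (linform n zeta (s k)) * height n (s (S k)) * height n (s (k + n)%nat) ^ (n - 1).
Proof.
  intros Hn Hs Hinf K. destruct (Hinf K) as [k [Hk Hl]]. exists k. split; auto.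
  destruct n as [|m]; [lia|].
  assert (H := det_lin_bound m zeta (fun j => s (k + j)%nat) Hl).
  simpl in H. rewrite Nat.add_0_r Nat.add_1_r in H. replace (S m - 1)%nat with m by lia.
  apply H.
  - intros j j' Hj. apply (seq_ht_mono _ _ _ s Hs). lia.
  - intros j j' Hj. apply (seq_er_mono _ _ _ s Hs). lia.
Qed.

Lemma DetSim_inf n zeta s : (1 <= n)%nat ->
  SeqH n (fun v => Rabs (IZR (v 0%nat))) (simdist n zeta) s ->
  (forall K, exists k, (K <= k)%nat /\ lin_indep n (S n) (fun m => s (k + m)%nat)) ->
  forall K, exists k, (K <= k)%nat /\
    1 <= INR (Factorial.fact (S n)) * Rabs (IZR (s (k + n)%nat 0%nat)) * simdist n zeta (s (k + (n - 1))%nat) * simdist n zeta (s k) ^ (n - 1).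
Proof.
  intros Hn Hs Hinf K. destruct (Hinf K) as [k [Hk Hl]]. exists k. split; auto.
  destruct n as [|m]; [lia|].
  assert (H := det_sim_bound m zeta (fun j => s (k + j)%nat) Hl).
  simpl in H. rewrite Nat.add_0_r in H. replace (S m - 1)%nat with m by lia.
  apply H.
  - intros j j' Hj. apply (seq_ht_mono _ _ _ s Hs (k + j)%nat (k + j')%nat). lia.
  - intros j j' Hj. apply (seq_er_mono _ _ _ s Hs). lia.
Qed.

Theorem theorem4p1 (n : nat) (zeta : nat -> R) :
  (2 <= n)%nat -> Q_lin_indep_1 n zeta ->
  (* (i) *)
  (forall w wh w3 : R,
     is_lub (w_set n zeta 1) w -> is_lub (what_set n zeta 1) wh ->
     is_lub (w_set n zeta 3) w3 ->
     wh ^ 2 / w <= w3) /\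
  (* (ii) *)
  ((exists bv : nat -> zvec, best_approx_seq n zeta bv /\
      forall K : nat, exists k : nat, (K <= k)%nat /\
        lin_indep n (S n) (fun m => bv (k + m)%nat)) ->
   forall w wh : R,
     is_lub (w_set n zeta 1) w -> is_lub (what_set n zeta 1) wh ->
     (forall (i : nat) (wi : R), (1 <= i <= S n)%nat ->
        is_lub (w_set n zeta i) wi ->
        powerRZ wh (Z.of_nat i - 1) / powerRZ w (Z.of_nat i - 2) <= wi) /\
     wh * Rpower ((wh - 1) / INR (n - 1)) (/ INR (n - 1)) <= w) /\
  (* (iii) *)
  (forall l lh l3 : R,
     is_lub (lambda_set n zeta 1) l -> is_lub (lhat_set n zeta 1) lh ->
     is_lub (lambda_set n zeta 3) l3 ->
     lh ^ 2 / l <= l3) /\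
  (* (iv) *)
  ((exists bu : nat -> zvec, sim_best_approx_seq n zeta bu /\
      forall K : nat, exists k : nat, (K <= k)%nat /\
        lin_indep n (S n) (fun m => bu (k + m)%nat)) ->
   forall l lh : R,
     is_lub (lambda_set n zeta 1) l -> is_lub (lhat_set n zeta 1) lh ->
     (forall (i : nat) (li : R), (1 <= i <= S n)%nat ->
        is_lub (lambda_set n zeta i) li ->
        powerRZ lh (Z.of_nat i - 1) / powerRZ l (Z.of_nat i - 2) <= li) /\
     l >= lh * Rpower (INR (n - 1) * lh / (1 - lh)) (/ INR (n - 1))).
Proof.
  intros Hn HQ.
  set htL := height n. set erL := fun v => Rabs (linform n zeta v).
  set htS := fun v : zvec => Rabs (IZR (v 0%nat)). set erS := simdist n zeta.
  assert (HwL : forall j, w_set n zeta j = gset n htL erL j) by reflexivity.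
  assert (HhL : forall j, what_set n zeta j = ghat n htL erL j) by reflexivity.
  assert (HwS : forall j, lambda_set n zeta j = gset n htS erS j) by reflexivity.
  assert (HhS : forall j, lhat_set n zeta j = ghat n htS erS j) by reflexivity.
  split; [|split; [|split]].
  -
    intros w wh w3 Hw Hwh Hw3. rewrite HwL in Hw Hw3. rewrite HhL in Hwh.
    set s := lin_seq n zeta.
    assert (Hs : SeqH n htL erL s) by (apply lin_seq_SeqH; auto).
    assert (Hinf := lin_triple n zeta s Hn HQ Hs). unfold shift in Hinf.
    assert (H := G1 n htL erL s w wh 3 Hs ltac:(lia) Hw Hwh (lin_hat0 n zeta) Hinf).
    assert (Hle := lub_ge _ _ _ Hw3 H). simpl in Hle. rewrite !Rmult_1_r in Hle. simpl. rewrite Rmult_1_r. exact Hle.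
  -
    intros [bv [Hbv Hinf]] w wh Hw Hwh. rewrite HwL in Hw. rewrite HhL in Hwh.
    assert (Hs : SeqH n htL erL bv) by (apply bestseq_SeqH; auto).
    split.
    + intros i wi Hi Hwi. rewrite HwL in Hwi.
      apply (ipart n htL erL bv w wh Hs Hw Hwh (lin_hat0 n zeta) Hinf i wi Hi Hwi).
    + apply final_lin; auto.
      * apply (lub_ub _ _ _ Hwh). apply lin_hat0.
      * eapply hat_le_set; eauto.
      * apply (G2lin n htL erL bv w wh (INR (Factorial.fact (S n))) Hs ltac:(lia) Hw Hwh (lin_hat0 n zeta)).
        apply lt_0_INR. pose proof (Factorial.lt_O_fact (S n)). lia.
        apply DetLin_inf; auto. lia.
  -
    intros l lh l3 Hl Hlh Hl3. rewrite HwS in Hl Hl3. rewrite HhS in Hlh.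
    assert (H0 : ghat n htS erS 1 0) by apply sim_hat0.
    assert (Hlh0 : 0 <= lh) by (apply (lub_ub _ _ _ Hlh); auto).
    destruct Hlh0 as [Hp|Hz].
    + assert (HS := smallsim_of_lub n zeta lh Hlh Hp).
      set s := sim_seq n zeta.
      assert (Hs : SeqH n htS erS s) by (apply sim_seq_SeqH; auto; lia).
      assert (Hinf := sim_triple n zeta s Hn HQ HS Hs). unfold shift in Hinf.
      assert (H := G1 n htS erS s l lh 3 Hs ltac:(lia) Hl Hlh H0 Hinf).
      assert (Hle := lub_ge _ _ _ Hl3 H). simpl in Hle. rewrite !Rmult_1_r in Hle. simpl. rewrite Rmult_1_r. exact Hle.
    + rewrite -Hz. unfold Rdiv. simpl. rewrite !Rmult_0_l.
      apply (lub_ub _ _ _ Hl3). apply lambda3_zero; auto.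
  -
    intros [bu [Hbu Hinf]] l lh Hl Hlh. rewrite HwS in Hl. rewrite HhS in Hlh.
    assert (Hs : SeqH n htS erS bu) by (apply simseq_SeqH; auto; lia).
    split.
    + intros i li Hi Hli. rewrite HwS in Hli.
      apply (ipart n htS erS bu l lh Hs Hl Hlh (sim_hat0 n zeta) Hinf i li Hi Hli).
    + apply final_sim; auto.
      * apply (lub_ub _ _ _ Hlh). apply sim_hat0.
      * eapply hat_le_set; eauto.
      * apply (G2sim n htS erS bu l lh (INR (Factorial.fact (S n))) Hs ltac:(lia) Hl Hlh (sim_hat0 n zeta)).
        apply lt_0_INR. pose proof (Factorial.lt_O_fact (S n)). lia.
        apply DetSim_inf; auto. lia.
Qed.
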